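(* Let $A,A_0>0$ and let $\tilde w_A\in C((-\infty,0])$ be $\tilde w_A(x)=\min\{A\sinh x+\cosh x-1,0\}$. For $\varepsilon\in(0,1)$ set $\tilde c_\varepsilon=-\dfrac{A-A_0}{\log\varepsilon}$ and let $\tilde w_{A,\varepsilon}$ be the local solution of the shooting problem $$-\tilde c_\varepsilon w'=(\varepsilon+\Phi_\varepsilon^2(w))w''+\Phi_\varepsilon(w)(1-\Phi_\varepsilon^2(w))\sqrt{\varepsilon+\Phi_\varepsilon^2(w)}\ \ (x<0),\qquad w(0)=0,\ w'(0)=A_0,$$ continued as long as it stays bounded. Then, as $\varepsilon\to0$, $\tilde w_{A,\varepsilon}\to\tilde w_A$ in $C_{\mathrm{loc}}((-\log\frac{1+A}{1-A},0])$ if $0<A<1$, and in $C_{\mathrm{loc}}((-\infty,0])$ if $A>1$.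
   Context: For $\varepsilon>0$, $U_\varepsilon(\phi)=2\int_0^\phi\sqrt{\varepsilon+s^2}\,ds$ is strictly increasing, odd and onto $\mathbb R$; $\Phi_\varepsilon$ denotes its inverse. $C_{\mathrm{loc}}$ convergence on an interval $I$ means uniform convergence on every compact subset of $I$ (on which the functions are defined for $\varepsilon$ small). *)

(* Defs.v *)
From Stdlib Require Import Reals Lra ClassicalEpsilon.
From Coquelicot Require Import Coquelicot.
Open Scope R_scope.

Definition U_eps (eps phi : R) : R :=
  2 * RInt (fun s => sqrt (eps + s ^ 2)) 0 phi.

(* Phi_eps = inverse of U_eps (U_eps is a strictly increasing bijection of R
   for eps > 0, so this choice is the unique preimage). *)
Definition Phi_eps (eps w : R) : R :=
  epsilon (inhabits 0) (fun phi => U_eps eps phi = w).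

Definition w_tilde (A x : R) : R := Rmin (A * sinh x + cosh x - 1) 0.

Definition c_tilde (A A0 eps : R) : R := - (A - A0) / ln eps.

(* w is the maximal solution, on (a,0], of
     -c w' = (eps + Phi^2(w)) w'' + Phi(w)(1 - Phi^2(w)) sqrt(eps + Phi^2(w))  (x<0),
     w(0)=0, w'(0)=A0,
   with derivatives dw, ddw; maximal = continued as long as it stays bounded. *)
Definition is_shooting_solution (A A0 eps : R) (a : Rbar) (w dw ddw : R -> R) : Prop :=
  Rbar_lt a 0 /\
  w 0 = 0 /\
  filterlim w (at_left 0) (locally 0) /\
  filterlim dw (at_left 0) (locally A0) /\
  (forall x, Rbar_lt a x -> x < 0 ->
     is_derive w x (dw x) /\ is_derive dw x (ddw x) /\
     let p := Phi_eps eps (w x) in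
     - c_tilde A A0 eps * dw x
       = (eps + p ^ 2) * ddw x + p * (1 - p ^ 2) * sqrt (eps + p ^ 2)) /\
  (a = m_infty \/
   ~ (exists M, forall x, Rbar_lt a x -> x <= 0 -> Rabs (w x) <= M)).

(* C_loc((L,0]) convergence as eps -> 0+ of the family w eps (defined on (a eps, 0])
   to f: on every compact [x0,0] with L < x0 the functions are eventually defined
   and converge uniformly. *)
Definition cloc_conv (L : Rbar) (a : R -> Rbar) (w : R -> R -> R) (f : R -> R) : Prop :=
  forall x0, Rbar_lt L x0 -> x0 <= 0 ->
  forall eta, 0 < eta ->
  exists delta, 0 < delta /\
    forall eps, 0 < eps -> eps < 1 -> eps < delta ->
      Rbar_lt (a eps) x0 /\
      forall x, x0 <= x <= 0 -> Rabs (w eps x - f x) < eta.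

(* Main.v *)
Require Import Defs.
From Stdlib Require Import Reals Lra Psatz ClassicalEpsilon.
From Coquelicot Require Import Coquelicot.
Require Import Stdlib.Reals.Ranalysis5.
Open Scope R_scope.

Lemma fsq_cont eps (He : 0 < eps) y : continuous (fun s => sqrt (eps + s^2)) y.
Proof.
  apply (@ex_derive_continuous R_AbsRing R_NormedModule). auto_derive. nra.
Qed.

Lemma U_deriv eps (He : 0 < eps) p : is_derive (U_eps eps) p (2 * sqrt (eps + p^2)).
Proof.
  unfold U_eps.
  apply is_derive_scal.
  apply (is_derive_RInt (fun s => sqrt (eps + s^2)) (fun b => RInt (fun s => sqrt (eps + s^2)) 0 b) 0 p).
  - apply filter_forall. intros b. apply (@RInt_correct R_CompleteNormedModule).
    apply ex_RInt_continuous. intros z _. apply fsq_cont; auto.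
  - apply fsq_cont; auto.
Qed.

Lemma U_0 eps : U_eps eps 0 = 0.
Proof. unfold U_eps. rewrite RInt_point. unfold zero; simpl; ring. Qed.

Lemma mono_le (f df : R -> R) a b :
  a <= b ->
  (forall x, a <= x <= b -> is_derive f x (df x)) ->
  (forall x, a <= x <= b -> 0 <= df x) -> f a <= f b.
Proof.
  intros Hab Hd Hp.
  destruct (Req_dec a b) as [->|Hne]; [lra|].
  destruct (MVT_gen f a b df) as [c [Hc Heq]].
  - intros x Hx. apply Hd. rewrite Rmin_left in Hx by lra. rewrite Rmax_right in Hx by lra. lra.
  - intros x Hx. rewrite Rmin_left in Hx by lra. rewrite Rmax_right in Hx by lra.
    apply continuity_pt_filterlim. apply (@ex_derive_continuous R_AbsRing R_NormedModule). eexists. apply Hd. lra.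
  - rewrite Rmin_left in Hc by lra. rewrite Rmax_right in Hc by lra.
    assert (0 <= df c) by (apply Hp; lra). nra.
Qed.

Lemma sqrt_facts eps x : 0 < eps ->
  let s := sqrt (eps + x^2) in
  0 < s /\ s * s = eps + x^2 /\ Rabs x <= s /\ sqrt eps <= s /\ s <= sqrt eps + Rabs x
  /\ 0 < sqrt eps /\ sqrt eps * sqrt eps = eps.
Proof.
  intros He s.
  assert (Hs: 0 < s) by (apply sqrt_lt_R0; nra).
  assert (Hss: s * s = eps + x^2) by (apply sqrt_sqrt; nra).
  assert (He1: 0 < sqrt eps) by (apply sqrt_lt_R0; nra).
  assert (He2: sqrt eps * sqrt eps = eps) by (apply sqrt_sqrt; nra).
  assert (Ha: 0 <= Rabs x) by apply Rabs_pos.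
  assert (Ha2: Rabs x * Rabs x = x^2) by (rewrite <- Rabs_mult; rewrite Rabs_right; nra).
  repeat split; try nra.
Qed.

Lemma U_comb_deriv eps (He : 0 < eps) k (g : R -> R) dg x :
  is_derive g x dg ->
  is_derive (fun y => k * U_eps eps y + g y) x (k * (2 * sqrt (eps + x^2)) + dg).
Proof.
  intros Hg.
  apply (is_derive_plus (fun y => k * U_eps eps y) g).
  - apply is_derive_scal. apply U_deriv; auto.
  - exact Hg.
Qed.

Lemma U_cont eps (He : 0 < eps) x : continuity_pt (U_eps eps) x.
Proof.
  apply continuity_pt_filterlim. apply (@ex_derive_continuous R_AbsRing R_NormedModule).
  eexists. apply U_deriv; auto.
Qed.

Lemma U_bounds_pos eps (He : 0 < eps) p : 0 <= p ->
  p^2 <= U_eps eps p <= p^2 + 2 * sqrt eps * p.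
Proof.
  intros Hp. split.
  - assert (HH : 1 * U_eps eps 0 + (- 0^2) <= 1 * U_eps eps p + (- p^2)).
    { apply (mono_le (fun y => 1 * U_eps eps y + (- y^2))
               (fun y => 1 * (2 * sqrt (eps + y^2)) + (- (2*y))) 0 p Hp).
      + intros y Hy. apply U_comb_deriv; auto. auto_derive; auto. ring.
      + intros y Hy. destruct (sqrt_facts eps y He) as (?&?&?&?&?&?&?).
        assert (y <= Rabs y) by apply RRle_abs. nra. }
    rewrite U_0 in HH. nra.
  - assert (HH : -1 * U_eps eps 0 + (0^2 + 2 * sqrt eps * 0) <= -1 * U_eps eps p + (p^2 + 2 * sqrt eps * p)).
    { apply (mono_le (fun y => (-1) * U_eps eps y + (y^2 + 2 * sqrt eps * y))
               (fun y => (-1) * (2 * sqrt (eps + y^2)) + (2*y + 2 * sqrt eps)) 0 p Hp).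
      + intros y Hy. apply U_comb_deriv; auto. auto_derive; auto. ring.
      + intros y Hy. destruct (sqrt_facts eps y He) as (?&?&?&?&?&?&?).
        rewrite Rabs_right in * by lra. nra. }
    rewrite U_0 in HH. nra.
Qed.

Lemma U_bounds_neg eps (He : 0 < eps) p : p <= 0 ->
  - p^2 + 2 * sqrt eps * p <= U_eps eps p <= - p^2.
Proof.
  intros Hp. split.
  - assert (HH : -1 * U_eps eps p + (- p^2 + 2 * sqrt eps * p) <= -1 * U_eps eps 0 + (- 0^2 + 2 * sqrt eps * 0)).
    { apply (mono_le (fun y => (-1) * U_eps eps y + (- y^2 + 2 * sqrt eps * y))
               (fun y => (-1) * (2 * sqrt (eps + y^2)) + (- (2*y) + 2 * sqrt eps)) p 0 Hp).
      + intros y Hy. apply U_comb_deriv; auto. auto_derive; auto. ring.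
      + intros y Hy. destruct (sqrt_facts eps y He) as (?&?&?&?&?&?&?).
        rewrite Rabs_left1 in * by lra. nra. }
    rewrite U_0 in HH. nra.
  - assert (HH : 1 * U_eps eps p + (p^2) <= 1 * U_eps eps 0 + (0^2)).
    { apply (mono_le (fun y => 1 * U_eps eps y + (y^2))
               (fun y => 1 * (2 * sqrt (eps + y^2)) + (2*y)) p 0 Hp).
      + intros y Hy. apply U_comb_deriv; auto. auto_derive; auto. ring.
      + intros y Hy. destruct (sqrt_facts eps y He) as (?&?&?&?&?&?&?).
        assert (- y <= Rabs y) by (rewrite <- Rabs_Ropp; apply RRle_abs). nra. }
    rewrite U_0 in HH. nra.
Qed.

Lemma U_strict eps (He : 0 < eps) p1 p2 : p1 <= p2 ->
  2 * sqrt eps * (p2 - p1) <= U_eps eps p2 - U_eps eps p1.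
Proof.
  intros Hp.
  assert (HH : 1 * U_eps eps p1 + - (2 * sqrt eps * p1) <= 1 * U_eps eps p2 + - (2 * sqrt eps * p2)).
  { apply (mono_le (fun y => 1 * U_eps eps y + (- (2 * sqrt eps * y)))
               (fun y => 1 * (2 * sqrt (eps + y^2)) + (- (2 * sqrt eps))) p1 p2 Hp).
    + intros y Hy. apply U_comb_deriv; auto. auto_derive; auto. ring.
    + intros y Hy. destruct (sqrt_facts eps y He) as (?&?&?&?&?&?&?). nra. }
  lra.
Qed.

Lemma U_surj eps (He : 0 < eps) w : exists p, U_eps eps p = w.
Proof.
  assert (Hc : continuity (U_eps eps)) by (intros x; apply U_cont; auto).
  destruct (Rle_lt_dec 0 w) as [Hw|Hw].
  - destruct (U_bounds_pos eps He (sqrt w) (sqrt_pos w)) as [H1 _].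
    rewrite <- Rsqr_pow2, Rsqr_sqrt in H1 by lra.
    destruct (IVT_gen (U_eps eps) 0 (sqrt w) w Hc) as [x [_ Hx]].
    + rewrite U_0. rewrite Rmin_left, Rmax_right; lra.
    + eauto.
  - assert (Hq: 0 <= -w) by lra.
    destruct (U_bounds_neg eps He (- sqrt (-w))) as [_ H1].
    { assert (0 <= sqrt (-w)) by apply sqrt_pos. lra. }
    replace ((- sqrt (-w))^2) with (Rsqr (sqrt (-w))) in H1 by (unfold Rsqr; ring).
    rewrite Rsqr_sqrt in H1 by lra.
    destruct (IVT_gen (U_eps eps) (- sqrt (-w)) 0 w Hc) as [x [_ Hx]].
    + rewrite U_0. rewrite Rmin_left, Rmax_right; lra.
    + eauto.
Qed.

Lemma Phi_spec eps (He : 0 < eps) w : U_eps eps (Phi_eps eps w) = w.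
Proof.
  unfold Phi_eps. apply (epsilon_spec (inhabits 0) (fun phi => U_eps eps phi = w)).
  apply U_surj; auto.
Qed.

Lemma U_inj eps (He : 0 < eps) a b : U_eps eps a = U_eps eps b -> a = b.
Proof.
  intros H. destruct (Rle_dec a b).
  - assert (Ha := U_strict eps He a b r). assert (0 < sqrt eps) by (apply sqrt_lt_R0; lra). nra.
  - assert (Ha := U_strict eps He b a ltac:(lra)). assert (0 < sqrt eps) by (apply sqrt_lt_R0; lra). nra.
Qed.

Lemma Phi_U eps (He : 0 < eps) p : Phi_eps eps (U_eps eps p) = p.
Proof. apply (U_inj eps He). apply Phi_spec; auto. Qed.

Lemma Phi_0 eps (He : 0 < eps) : Phi_eps eps 0 = 0.
Proof. rewrite <- (U_0 eps) at 1. apply Phi_U; auto. Qed.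

Lemma Phi_lip eps (He : 0 < eps) w1 w2 :
  2 * sqrt eps * Rabs (Phi_eps eps w1 - Phi_eps eps w2) <= Rabs (w1 - w2).
Proof.
  set (p1 := Phi_eps eps w1). set (p2 := Phi_eps eps w2).
  assert (E1 : U_eps eps p1 = w1) by apply Phi_spec, He.
  assert (E2 : U_eps eps p2 = w2) by apply Phi_spec, He.
  assert (0 < sqrt eps) by (apply sqrt_lt_R0; lra).
  destruct (Rle_dec p1 p2).
  - assert (Ha := U_strict eps He p1 p2 r).
    rewrite Rabs_left1 by nra. rewrite Rabs_left1 by nra. nra.
  - assert (Ha := U_strict eps He p2 p1 ltac:(lra)).
    rewrite Rabs_right by nra. rewrite Rabs_right by nra. nra.
Qed.

Lemma Phi_cont eps (He : 0 < eps) w : continuity_pt (Phi_eps eps) w.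
Proof.
  assert (Hs: 0 < sqrt eps) by (apply sqrt_lt_R0; lra).
  intros e He'. exists (2 * sqrt eps * e). split.
  - unfold D_x, no_cond. nra.
  - intros x [_ Hx]. simpl in *. unfold R_dist in *.
    assert (H := Phi_lip eps He x w).
    apply (Rmult_lt_reg_l (2 * sqrt eps)); nra.
Qed.

Lemma Phi_mono eps (He : 0 < eps) w1 w2 : w1 <= w2 -> Phi_eps eps w1 <= Phi_eps eps w2.
Proof.
  intros Hw. destruct (Rle_dec (Phi_eps eps w1) (Phi_eps eps w2)) as [r|n]; auto.
  assert (Ha := U_strict eps He _ _ (Rlt_le _ _ (Rnot_le_lt _ _ n))).
  rewrite !Phi_spec in Ha by auto.
  assert (0 < sqrt eps) by (apply sqrt_lt_R0; lra).
  assert (0 < Phi_eps eps w1 - Phi_eps eps w2) by lra. nra.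
Qed.

Lemma Phi_deriv eps (He : 0 < eps) w :
  is_derive (Phi_eps eps) w (/ (2 * sqrt (eps + (Phi_eps eps w)^2))).
Proof.
  apply is_derive_Reals.
  assert (Prf : forall a, Phi_eps eps (w-1) <= a <= Phi_eps eps (w+1) -> derivable_pt (U_eps eps) a).
  { intros a _. exists (2 * sqrt (eps + a^2)). apply is_derive_Reals. apply U_deriv; auto. }
  assert (Hinc : Phi_eps eps (w-1) <= Phi_eps eps w <= Phi_eps eps (w+1)).
  { split; apply Phi_mono; lra. }
  assert (Hd : derive_pt (U_eps eps) (Phi_eps eps w) (Prf (Phi_eps eps w) Hinc)
               = 2 * sqrt (eps + (Phi_eps eps w)^2)).
  { apply derive_pt_eq_0. apply is_derive_Reals. apply U_deriv; auto. }
  assert (H := derivable_pt_lim_recip_interv (U_eps eps) (Phi_eps eps) (w-1) (w+1) w Prf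
     (Phi_cont eps He w) ltac:(lra) ltac:(lra) Hinc).
  rewrite Hd in H.
  destruct (sqrt_facts eps (Phi_eps eps w) He) as (?&?&?&?&?&?&?).
  replace (/ (2 * sqrt (eps + Phi_eps eps w ^ 2))) with (1 / (2 * sqrt (eps + Phi_eps eps w ^ 2))) by (field; lra).
  apply H.
  - intros x _. unfold comp, id. apply Phi_spec; auto.
  - lra.
Qed.

Lemma at_left_ex (f : R -> R) l zeta : 0 < zeta ->
  filterlim f (at_left 0) (locally l) ->
  exists delta, 0 < delta /\ forall z, -delta < z < 0 -> Rabs (f z - l) < zeta.
Proof.
  intros Hz Hf.
  destruct (proj1 (filterlim_locally f l) Hf (mkposreal zeta Hz)) as [d Hd].
  exists d. split; [apply cond_pos|].
  intros z Hzz. assert (H := Hd z). 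
  assert (Hb : ball 0 d z).
  { unfold ball; simpl; unfold AbsRing_ball, abs, minus, plus, opp; simpl.
    rewrite Rabs_left; lra. }
  specialize (H Hb ltac:(lra)). revert H.
  unfold ball; simpl; unfold AbsRing_ball, abs, minus, plus, opp; simpl. auto.
Qed.

Lemma le_eps_approx a b k : 0 <= k -> (forall z, 0 < z -> a <= b + k * z) -> a <= b.
Proof.
  intros Hk H. destruct (Rle_dec a b) as [r|n]; auto.
  assert (Hab : b < a) by lra.
  specialize (H ((a - b) / (2 * (k + 1))) ltac:(apply Rdiv_lt_0_compat; lra)).
  assert (k * ((a - b) / (2 * (k + 1))) < a - b).
  { apply (Rmult_lt_reg_r (2 * (k+1))); [lra|].
    field_simplify; [|lra]. nra. }
  lra.
Qed.

Lemma lim0_bound (f df : R -> R) lo l y : y < 0 ->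
  (forall z, y <= z < 0 -> is_derive f z (df z)) ->
  (forall z, y <= z < 0 -> lo <= df z) ->
  filterlim f (at_left 0) (locally l) -> f y <= l + lo * y.
Proof.
  intros Hy Hd Hlo Hf.
  apply (le_eps_approx _ _ (1 + Rabs lo)); [assert (0 <= Rabs lo) by apply Rabs_pos; lra|].
  intros zeta Hz.
  destruct (at_left_ex f l zeta Hz Hf) as [d [Hd0 Hdd]].
  set (y' := Rmax y (- Rmin d zeta / 2)).
  assert (Hm1 : 0 < Rmin d zeta) by (apply Rmin_pos; lra).
  assert (Hm2 : Rmin d zeta <= d) by apply Rmin_l.
  assert (Hm3 : Rmin d zeta <= zeta) by apply Rmin_r.
  assert (Hy1 : y <= y') by apply Rmax_l.
  assert (Hy2 : - Rmin d zeta / 2 <= y') by apply Rmax_r.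
  assert (Hy3 : y' < 0) by (unfold y'; apply Rmax_lub_lt; lra).
  assert (HH : f y + (- lo * y) <= f y' + (- lo * y')).
  { apply (mono_le (fun x => f x + (- lo * x)) (fun x => df x + (- lo))); auto.
    - intros x Hx. apply (is_derive_plus f (fun x => - lo * x)).
      + apply Hd; lra.
      + auto_derive; auto. ring.
    - intros x Hx. assert (lo <= df x) by (apply Hlo; lra). lra. }
  assert (Hfy : Rabs (f y' - l) < zeta) by (apply Hdd; lra).
  assert (Hlo' : - lo * y' <= Rabs lo * zeta).
  { assert (Habs : Rabs (- lo * y') = Rabs lo * Rabs y') by (rewrite Rabs_mult, Rabs_Ropp; auto).
    assert (Rabs y' <= zeta) by (rewrite Rabs_left; lra).
    assert (- lo * y' <= Rabs (- lo * y')) by apply RRle_abs.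
    assert (0 <= Rabs lo) by apply Rabs_pos. nra. }
  assert (f y' - l <= Rabs (f y' - l)) by apply RRle_abs.
  nra.
Qed.

Lemma real_ind (S : R -> Prop) s : s <= 0 -> S 0 ->
  (forall m, s <= m < 0 -> (forall z, m < z <= 0 -> S z) -> S m) ->
  (forall m, s < m <= 0 -> (forall z, m <= z <= 0 -> S z) ->
       exists t, s <= t < m /\ forall z, t <= z <= 0 -> S z) ->
  forall z, s <= z <= 0 -> S z.
Proof.
  intros Hs H0 Hcl Hop.
  set (E := fun u => s <= - u <= 0 /\ forall z, - u <= z <= 0 -> S z).
  assert (HE0 : E 0) by (split; [lra| intros z Hz; replace z with 0 by lra; auto]).
  assert (Hb : bound E) by (exists (- s); intros u [Hu _]; lra).
  destruct (completeness E Hb (ex_intro _ 0 HE0)) as [M [HMub HMl]].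
  assert (HM0 : 0 <= M) by (apply HMub; auto).
  assert (HMs : M <= - s) by (apply HMl; intros u [Hu _]; lra).
  set (m := - M).
  assert (Hright : forall z, m < z <= 0 -> S z).
  { intros z Hz.
    destruct (classic (exists u, E u /\ - z < u)) as [[u [[Hu1 Hu2] Hu3]]|Hn].
    - apply Hu2; lra.
    - exfalso. assert (M <= - z).
      { apply HMl. intros u Hu. destruct (Rle_dec u (- z)); auto.
        exfalso; apply Hn; exists u; split; auto; lra. }
      unfold m in Hz; lra. }
  assert (Hm : S m).
  { destruct (Req_dec m 0) as [Heq|Hne]; [rewrite Heq; auto|].
    assert (0 < M).
    { destruct (Rle_lt_or_eq_dec 0 M HM0) as [h|h]; auto. exfalso; apply Hne; unfold m; rewrite <- h; ring. }
    apply Hcl; [unfold m; lra| auto]. }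
  assert (Hall : forall z, m <= z <= 0 -> S z).
  { intros z Hz. destruct (Req_dec z m) as [->|Hne]; auto. apply Hright; lra. }
  destruct (Req_dec m s) as [Hms|Hms].
  - intros z Hz. apply Hall. lra.
  - exfalso. assert (s < m).
    { destruct (Rle_lt_or_eq_dec s m) as [h|h]; auto. unfold m; lra. exfalso; auto. }
    destruct (Hop m ltac:(unfold m in *; lra) Hall) as [t [Ht1 Ht2]].
    assert (E (- t)) by (split; [unfold m in *; lra| intros z Hz; apply Ht2; lra]).
    assert (- t <= M) by (apply HMub; auto). unfold m in Ht1. lra.
Qed.

Lemma lim_plus (f g : R -> R) a b : filterlim f (at_left 0) (locally a) ->
  filterlim g (at_left 0) (locally b) ->
  filterlim (fun x => f x + g x) (at_left 0) (locally (a + b)).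
Proof.
  intros Hf Hg.
  apply (filterlim_comp_2 f g Rplus Hf Hg (@filterlim_plus R_AbsRing R_NormedModule a b)).
Qed.

Lemma lim_mult (f g : R -> R) a b : filterlim f (at_left 0) (locally a) ->
  filterlim g (at_left 0) (locally b) ->
  filterlim (fun x => f x * g x) (at_left 0) (locally (a * b)).
Proof.
  intros Hf Hg.
  apply (filterlim_comp_2 f g Rmult Hf Hg (@filterlim_mult R_AbsRing a b)).
Qed.

Lemma lim_comp (f h : R -> R) a : filterlim f (at_left 0) (locally a) ->
  continuity_pt h a ->
  filterlim (fun x => h (f x)) (at_left 0) (locally (h a)).
Proof.
  intros Hf Hh. apply filterlim_comp with (G := locally a); auto.
  apply continuity_pt_filterlim; auto.
Qed.

Lemma lim_id : filterlim (fun x : R => x) (at_left 0) (locally 0).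
Proof.
  apply (filterlim_filter_le_1 (F := @locally R_UniformSpace 0)).
  - apply filter_le_within.
  - intros P HP. exact HP.
Qed.

Lemma lim_const (c : R) : filterlim (fun _ : R => c) (at_left 0) (@locally R_UniformSpace c).
Proof. apply filterlim_const. Qed.

Lemma lim_contf (h : R -> R) : continuity_pt h 0 ->
  filterlim h (at_left 0) (locally (h 0)).
Proof. intros H. apply (lim_comp (fun x => x) h 0 lim_id H). Qed.

Lemma lim_ext (f g : R -> R) l : (forall x, f x = g x) ->
  filterlim f (at_left 0) (locally l) -> filterlim g (at_left 0) (locally l).
Proof.
  intros He Hf. apply (filterlim_ext f g); auto.
Qed.

Lemma lim_unique_val (f : R -> R) l l' : filterlim f (at_left 0) (locally l) -> l = l' ->
  filterlim f (at_left 0) (locally l').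
Proof. intros H ->. auto. Qed.

Lemma contpt_of_derive (f : R -> R) x d : is_derive f x d -> continuity_pt f x.
Proof.
  intros H. apply continuity_pt_filterlim. apply (@ex_derive_continuous R_AbsRing R_NormedModule).
  eexists; eauto.
Qed.

Lemma contpt_ed (f : R -> R) x zeta : continuity_pt f x -> 0 < zeta ->
  exists delta, 0 < delta /\ forall z, Rabs (z - x) < delta -> Rabs (f z - f x) < zeta.
Proof.
  intros Hc Hz. destruct (Hc zeta Hz) as [d [Hd H]].
  exists d. split; auto. intros z Hzx.
  destruct (Req_dec z x) as [->|Hne].
  - rewrite Rminus_eq_0, Rabs_R0. auto.
  - apply (H z). split; [split; [exact I| auto]|]. exact Hzx.
Qed.

Lemma ln_le' x y : 0 < x -> x <= y -> ln x <= ln y.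
Proof.
  intros Hx Hxy. destruct (Rle_lt_or_eq_dec _ _ Hxy) as [h|h].
  - left; apply ln_increasing; auto.
  - rewrite h; lra.
Qed.

Lemma ln_sqrt' x : 0 < x -> ln (sqrt x) = ln x / 2.
Proof.
  intros Hx. assert (Hs : 0 < sqrt x) by (apply sqrt_lt_R0; auto).
  assert (ln (sqrt x * sqrt x) = ln (sqrt x) + ln (sqrt x)) by (apply ln_mult; auto).
  rewrite sqrt_sqrt in H by lra. lra.
Qed.

Definition Hf (eps u : R) : R := 2 * ln (u + sqrt (eps + u^2)) - ln eps.
Definition gf (eps u : R) : R := u * (1 - u^2) / sqrt (eps + u^2).
Definition Wf (A x : R) : R := A * sinh x + cosh x - 1.
Definition Vf (A x : R) : R := A * cosh x + sinh x.

Lemma arg_pos eps u : 0 < eps -> 0 < u + sqrt (eps + u^2).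
Proof.
  intros He. destruct (sqrt_facts eps u He) as (?&?&?&?&?&?&?).
  assert (- u <= Rabs u) by (rewrite <- Rabs_Ropp; apply RRle_abs).
  assert (Rabs u < sqrt (eps + u^2)).
  { assert (Rabs u * Rabs u = u^2) by (rewrite <- Rabs_mult; rewrite Rabs_right; nra).
    assert (0 <= Rabs u) by apply Rabs_pos. nra. }
  lra.
Qed.

Lemma Hf_deriv eps (He : 0 < eps) u : is_derive (Hf eps) u (2 / sqrt (eps + u^2)).
Proof.
  unfold Hf. assert (Ha := arg_pos eps u He).
  destruct (sqrt_facts eps u He) as (?&?&?&?&?&?&?).
  auto_derive; replace (u * (u * 1)) with (u^2) by ring.
  - split; [nra|]. split; [lra|exact I].
  - field. lra.
Qed.

Lemma Hf_0 eps (He : 0 < eps) : Hf eps 0 = 0.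
Proof.
  unfold Hf. replace (0 + sqrt (eps + 0^2)) with (sqrt eps) by (f_equal; ring_simplify; auto; f_equal; ring).
  rewrite ln_sqrt' by auto. lra.
Qed.

Lemma Hf_odd eps (He : 0 < eps) u : Hf eps (- u) = - Hf eps u.
Proof.
  unfold Hf.
  assert (H1 := arg_pos eps u He). assert (H2 := arg_pos eps (-u) He).
  replace ((-u)^2) with (u^2) in * by ring.
  assert (Hm : (- u + sqrt (eps + u^2)) * (u + sqrt (eps + u^2)) = eps).
  { destruct (sqrt_facts eps u He) as (?&?&?&?&?&?&?). nra. }
  assert (ln ((- u + sqrt (eps + u^2)) * (u + sqrt (eps + u^2))) =
          ln (- u + sqrt (eps + u^2)) + ln (u + sqrt (eps + u^2))) by (apply ln_mult; auto).
  rewrite Hm in H. lra.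
Qed.

Lemma Hf_cont eps (He : 0 < eps) u : continuity_pt (Hf eps) u.
Proof. apply (contpt_of_derive _ _ _ (Hf_deriv eps He u)). Qed.

Definition ellf (eps u : R) : R := ln (Rabs u + sqrt (eps + u^2)).

Lemma ell_bounds eps P u : 0 < eps < 1 -> Rabs u <= P ->
  ln eps / 2 <= ellf eps u <= ln (2 * P + 1).
Proof.
  intros He Hu. unfold ellf.
  destruct (sqrt_facts eps u ltac:(lra)) as (?&?&?&?&?&?&?).
  assert (sqrt eps <= 1).
  { rewrite <- sqrt_1. apply sqrt_le_1_alt. lra. }
  assert (0 <= Rabs u) by apply Rabs_pos.
  split.
  - rewrite <- ln_sqrt' by lra. apply ln_le'; lra.
  - apply ln_le'; lra.
Qed.

Lemma ell_lower_q eps q u : 0 < eps -> 0 < q -> q <= Rabs u -> ln q <= ellf eps u.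
Proof.
  intros He Hq Hu. unfold ellf.
  destruct (sqrt_facts eps u He) as (?&?&?&?&?&?&?).
  apply ln_le'; lra.
Qed.

Lemma Hf_abs eps u : 0 < eps -> Hf eps (Rabs u) = 2 * ellf eps u - ln eps.
Proof.
  intros He. unfold Hf, ellf. replace (Rabs u ^ 2) with (u ^ 2); [reflexivity|].
  rewrite <- Rsqr_pow2, <- Rsqr_pow2. apply Rsqr_abs.
Qed.

Definition Kf (A A0 eps u : R) : R := - c_tilde A A0 eps * Hf eps u - (A - A0).

Lemma Kf_neg A A0 eps u : 0 < eps < 1 -> u <= 0 ->
  Kf A A0 eps u = (A - A0) * (2 * ellf eps u) / (- ln eps).
Proof.
  intros He Hu. unfold Kf, c_tilde.
  assert (Hl : ln eps < 0) by (rewrite <- ln_1; apply ln_increasing; lra).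
  replace u with (- Rabs u) by (rewrite Rabs_left1; lra).
  rewrite Hf_odd by lra. rewrite Hf_abs by lra.
  replace (ellf eps (- Rabs u)) with (ellf eps u).
  2:{ unfold ellf. rewrite Rabs_Ropp, Rabs_Rabsolu.
      replace ((- Rabs u)^2) with (u^2); [reflexivity|].
      replace ((- Rabs u)^2) with (Rabs u ^ 2) by ring.
      rewrite <- Rsqr_pow2, <- Rsqr_pow2. apply Rsqr_abs. }
  field. lra.
Qed.

Lemma Kf_pos A A0 eps u : 0 < eps < 1 -> 0 <= u ->
  Kf A A0 eps u = - (A - A0) * (2 * ellf eps u / (- ln eps) + 2).
Proof.
  intros He Hu. unfold Kf, c_tilde.
  assert (Hl : ln eps < 0) by (rewrite <- ln_1; apply ln_increasing; lra).
  replace u with (Rabs u) at 1 by (rewrite Rabs_right; lra).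
  rewrite Hf_abs by lra.
  field. lra.
Qed.

Lemma Phi_nonpos eps (He : 0 < eps) w : w <= 0 -> Phi_eps eps w <= 0.
Proof. intros. rewrite <- (Phi_0 eps He). apply Phi_mono; auto. Qed.

Lemma Phi_rel eps (He : 0 < eps) w :
  let p := Phi_eps eps w in
  p^2 <= Rabs w /\ Rabs w <= 2 * p^2 + eps /\
  (p <= 0 -> - p^2 + 2 * sqrt eps * p <= w <= - p^2) /\
  (0 <= p -> p^2 <= w <= p^2 + 2 * sqrt eps * p).
Proof.
  intros p. assert (Hw : U_eps eps p = w) by (apply Phi_spec; auto).
  destruct (sqrt_facts eps 0 He) as (?&?&?&?&?&?&?).
  assert (Hn : p <= 0 -> - p^2 + 2 * sqrt eps * p <= w <= - p^2)
    by (intros; rewrite <- Hw; apply U_bounds_neg; auto).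
  assert (Hp : 0 <= p -> p^2 <= w <= p^2 + 2 * sqrt eps * p)
    by (intros; rewrite <- Hw; apply U_bounds_pos; auto).
  split; [|split]; auto.
  - destruct (Rle_dec p 0) as [h|h].
    + destruct (Hn h). rewrite Rabs_left1 by nra. lra.
    + destruct (Hp ltac:(lra)). rewrite Rabs_right by nra. lra.
  - destruct (Rle_dec p 0) as [h|h].
    + destruct (Hn h). rewrite Rabs_left1 by nra.
      assert (0 <= (sqrt eps + p)^2) by apply pow2_ge_0.
      assert (E: (sqrt eps + p)^2 = sqrt eps * sqrt eps + 2*sqrt eps*p + p^2) by ring. lra.
    + destruct (Hp ltac:(lra)). rewrite Rabs_right by nra.
      assert (0 <= (sqrt eps - p)^2) by apply pow2_ge_0.
      assert (E: (sqrt eps - p)^2 = sqrt eps * sqrt eps - 2*sqrt eps*p + p^2) by ring. lra.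
Qed.

Lemma Phi_le_q eps (He : 0 < eps) q w : 0 <= q -> w <= - (2 * q^2 + eps) -> Phi_eps eps w <= - q.
Proof.
  intros Hq Hw. destruct (Phi_rel eps He w) as (H1 & H2 & _ & _).
  assert (Hp : Phi_eps eps w <= 0) by (apply Phi_nonpos; nra).
  rewrite Rabs_left1 in H2 by nra.
  nra.
Qed.

Lemma Phi_bound eps (He : 0 < eps) M w : 0 <= M -> Rabs w <= M -> Rabs (Phi_eps eps w) <= M + 1.
Proof.
  intros HM Hw. destruct (Phi_rel eps He w) as (H1 & _ & _ & _).
  assert (Rabs (Phi_eps eps w) ^ 2 <= M).
  { replace (Rabs (Phi_eps eps w) ^ 2) with (Phi_eps eps w ^ 2); [lra|].
    rewrite <- Rsqr_pow2, <- Rsqr_pow2. apply Rsqr_abs. }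
  assert (0 <= Rabs (Phi_eps eps w)) by apply Rabs_pos. nra.
Qed.

Lemma Kf_crude A A0 eps P u : 0 < eps < 1 -> 0 <= P -> 2 * ln (2 * P + 1) <= - ln eps ->
  Rabs u <= P -> Rabs (Kf A A0 eps u) <= 3 * Rabs (A - A0).
Proof.
  intros He HP Hr Hu.
  assert (Hl : ln eps < 0) by (rewrite <- ln_1; apply ln_increasing; lra).
  destruct (ell_bounds eps P u He Hu) as [E1 E2].
  set (s := 2 * ellf eps u / (- ln eps)).
  assert (Hs1 : -1 <= s).
  { unfold s. apply (Rmult_le_reg_r (- ln eps)); [lra|]. field_simplify; lra. }
  assert (Hs2 : s <= 1).
  { unfold s. apply (Rmult_le_reg_r (- ln eps)); [lra|]. field_simplify; lra. }
  destruct (Rle_dec u 0) as [h|h].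
  - rewrite Kf_neg by (auto; lra).
    replace ((A - A0) * (2 * ellf eps u) / - ln eps) with ((A - A0) * s) by (unfold s; field; lra).
    rewrite Rabs_mult. assert (Rabs s <= 1) by (apply Rabs_le; lra).
    assert (0 <= Rabs (A - A0)) by apply Rabs_pos. nra.
  - rewrite Kf_pos by (auto; lra). fold s.
    rewrite Rabs_mult, Rabs_Ropp. assert (Rabs (s + 2) <= 3) by (apply Rabs_le; lra).
    assert (0 <= Rabs (A - A0)) by apply Rabs_pos. nra.
Qed.

Lemma Kf_v A A0 eps P u : 0 < eps < 1 -> 0 <= P -> u <= 0 -> Rabs u <= P ->
  Rmin A A0 - Rabs (A - A0) * (2 * ln (2 * P + 1) / (- ln eps)) <= A + Kf A A0 eps u.
Proof.
  intros He HP Hu0 Hu.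
  assert (Hl : ln eps < 0) by (rewrite <- ln_1; apply ln_increasing; lra).
  destruct (ell_bounds eps P u He Hu) as [E1 E2].
  rewrite Kf_neg by (auto; lra).
  set (rho := 2 * ln (2 * P + 1) / (- ln eps)).
  set (s := 2 * ellf eps u / (- ln eps)).
  replace ((A - A0) * (2 * ellf eps u) / - ln eps) with ((A - A0) * s) by (unfold s; field; lra).
  assert (Hs1 : -1 <= s).
  { unfold s. apply (Rmult_le_reg_r (- ln eps)); [lra|]. field_simplify; lra. }
  assert (Hs2 : s <= rho).
  { unfold s, rho. apply (Rmult_le_reg_r (- ln eps)); [lra|]. field_simplify; lra. }
  destruct (Rle_dec A0 A) as [h|h].
  - rewrite Rmin_right by lra. rewrite Rabs_right by lra.
    assert (0 <= rho).
    { unfold rho. apply Rdiv_le_0_compat; [|lra].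
      assert (0 <= ln (2 * P + 1)) by (rewrite <- ln_1; apply ln_le'; lra). lra. }
    nra.
  - rewrite Rmin_left by lra. rewrite Rabs_left by lra. nra.
Qed.

Lemma Kf_small A A0 eps P q u : 0 < eps < 1 -> 0 < q <= 1 -> u <= - q -> Rabs u <= P ->
  Rabs (Kf A A0 eps u) <= Rabs (A - A0) * (2 * (ln (2 * P + 1) - ln q) / (- ln eps)).
Proof.
  intros He Hq Hu0 Hu.
  assert (Hl : ln eps < 0) by (rewrite <- ln_1; apply ln_increasing; lra).
  destruct (ell_bounds eps P u He Hu) as [E1 E2].
  assert (E3 : ln q <= ellf eps u) by (apply ell_lower_q; try lra; rewrite Rabs_left1; lra).
  assert (Hq0 : ln q <= 0) by (rewrite <- ln_1; apply ln_le'; lra).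
  rewrite Kf_neg by (auto; lra).
  set (s := 2 * ellf eps u / (- ln eps)).
  replace ((A - A0) * (2 * ellf eps u) / - ln eps) with ((A - A0) * s) by (unfold s; field; lra).
  rewrite Rabs_mult.
  assert (Rabs s <= 2 * (ln (2 * P + 1) - ln q) / - ln eps).
  { apply Rabs_le. unfold s. split.
    - apply (Rmult_le_reg_r (- ln eps)); [lra|]. field_simplify; try lra. 
      assert (0 <= ln (2 * P + 1)) by (rewrite <- ln_1; apply ln_le'; assert (0 <= Rabs u) by apply Rabs_pos; lra).
      lra.
    - apply (Rmult_le_reg_r (- ln eps)); [lra|]. field_simplify; lra. }
  assert (0 <= Rabs (A - A0)) by apply Rabs_pos. nra.
Qed.

Lemma gf_crude eps u : 0 < eps -> Rabs (gf eps u) <= 1 + u^2.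
Proof.
  intros He. unfold gf. destruct (sqrt_facts eps u He) as (?&?&?&?&?&?&?).
  rewrite Rabs_div by lra. rewrite Rabs_mult. rewrite (Rabs_right (sqrt _)) by lra.
  assert (Rabs (1 - u^2) <= 1 + u^2) by (apply Rabs_le; nra).
  assert (0 <= Rabs (1 - u^2)) by apply Rabs_pos.
  apply (Rmult_le_reg_r (sqrt (eps + u^2))); [lra|]. field_simplify; [|lra].
  assert (0 <= Rabs u) by apply Rabs_pos. nra.
Qed.

Lemma r_small eps q P w : 0 < eps -> 0 < q -> Phi_eps eps w <= - q -> Rabs (Phi_eps eps w) <= P ->
  Rabs (gf eps (Phi_eps eps w) + 1 + w) <= sqrt eps * ((1 + P^2) / q + 2 * P).
Proof.
  intros He Hq Hp HP.
  destruct (Phi_rel eps He w) as (_ & _ & Hn & _).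
  set (p := Phi_eps eps w) in *.
  destruct (Hn ltac:(lra)) as [Hw1 Hw2].
  destruct (sqrt_facts eps p He) as (Hs&Hss&Ha&Hb&Hc&Hd&He2).
  set (s := sqrt (eps + p^2)) in *.
  rewrite Rabs_left in Ha, Hc, HP by lra.
  unfold gf. fold s.
  set (Q := - p).
  assert (Hr : p * (1 - p^2) / s + 1 + w = (1 - Q^2) * ((s - Q) / s) + (Q^2 + w)) by (unfold Q; field; lra).
  rewrite Hr.
  assert (T1 : 0 <= (s - Q) / s) by (apply Rdiv_le_0_compat; unfold Q; lra).
  assert (T2 : (s - Q) / s <= sqrt eps / q).
  { apply (Rmult_le_reg_r (s * q)); [nra|]. field_simplify; [|lra|lra]. unfold Q. nra. }
  assert (T3 : Rabs (1 - Q^2) <= 1 + P^2) by (apply Rabs_le; unfold Q; nra).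
  assert (T4 : Rabs (Q^2 + w) <= 2 * sqrt eps * P) by (apply Rabs_le; unfold Q; nra).
  eapply Rle_trans; [apply Rabs_triang|]. rewrite Rabs_mult.
  rewrite (Rabs_right ((s - Q) / s)) by lra.
  assert (0 <= Rabs (1 - Q^2)) by apply Rabs_pos.
  assert (Rabs (1 - Q ^ 2) * ((s - Q) / s) <= (1 + P^2) * (sqrt eps / q)) by (apply Rmult_le_compat; lra).
  replace (sqrt eps * ((1 + P ^ 2) / q + 2 * P)) with ((1 + P^2) * (sqrt eps / q) + 2 * sqrt eps * P) by (field; lra).
  lra.
Qed.

Lemma Wf_deriv A x : is_derive (Wf A) x (Vf A x).
Proof. unfold Wf, Vf, sinh, cosh. auto_derive; auto. field. Qed.

Lemma Vf_deriv A x : is_derive (Vf A) x (1 + Wf A x).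
Proof. unfold Wf, Vf, sinh, cosh. auto_derive; auto. field. Qed.

Lemma Wf_0 A : Wf A 0 = 0.
Proof. unfold Wf, sinh, cosh. rewrite Ropp_0, exp_0. field. Qed.

Lemma Vf_0 A : Vf A 0 = A.
Proof. unfold Vf, sinh, cosh. rewrite Ropp_0, exp_0. field. Qed.

Lemma Wf_factor A x : Wf A x = (exp x - 1) * ((1 + A) * exp x - (1 - A)) / (2 * exp x).
Proof.
  unfold Wf, sinh, cosh. assert (H := exp_pos x).
  rewrite exp_Ropp. field. lra.
Qed.

Lemma Wf_neg A x0 x tau : 0 < A -> 0 < (1 + A) * exp x0 - (1 - A) -> x0 <= x -> x <= - tau -> 0 <= tau ->
  Wf A x <= - ((1 - exp (- tau)) * ((1 + A) * exp x0 - (1 - A)) / 2).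
Proof.
  intros HA Hb Hx Ht Htau. rewrite Wf_factor.
  set (t := exp x). set (b := (1 + A) * exp x0 - (1 - A)).
  assert (Hb0 : 0 < b) by (unfold b; lra).
  assert (Ht0 : 0 < t) by apply exp_pos.
  assert (Ht1 : t <= exp (- tau)) by (unfold t; destruct (Rle_lt_or_eq_dec _ _ Ht) as [h|h]; [left; apply exp_increasing; auto| rewrite h; lra]).
  assert (Ht2 : exp x0 <= t) by (unfold t; destruct (Rle_lt_or_eq_dec _ _ Hx) as [h|h]; [left; apply exp_increasing; auto| rewrite h; lra]).
  assert (Hte : exp (- tau) <= 1) by (rewrite <- exp_0; destruct (Rle_lt_or_eq_dec (-tau) 0 ltac:(lra)) as [h|h]; [left; apply exp_increasing; auto| rewrite h; lra]).
  assert (Hf : b <= (1 + A) * t - (1 - A)) by (unfold b; nra).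
  apply (Rmult_le_reg_r (2 * t)); [lra|].
  field_simplify; [|lra].
  assert ((1 - t) * ((1 + A) * t - (1 - A)) >= (1 - exp (- tau)) * b * t).
  { assert (0 <= 1 - exp (-tau)) by lra. assert (1 - exp (-tau) <= 1 - t) by lra.
    assert (t <= 1) by lra.
    assert (0 <= (1 - exp (-tau)) * b) by (apply Rmult_le_pos; lra).
    assert ((1 - exp (-tau)) * b * t <= (1 - exp (-tau)) * b) by nra.
    assert ((1 - exp (-tau)) * b <= (1 - t) * b) by nra.
    assert ((1 - t) * b <= (1 - t) * ((1 + A) * t - (1 - A))) by nra.
    lra. }
  nra.
Qed.

Lemma Wf_abs A x0 x : 0 < A -> 0 < (1 + A) * exp x0 - (1 - A) -> x0 <= x <= 0 ->
  Rabs (Wf A x) <= A * exp (- x0).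
Proof.
  intros HA Hb Hx.
  assert (H0 := Wf_neg A x0 x 0 HA Hb ltac:(lra) ltac:(lra) ltac:(lra)).
  rewrite Ropp_0, exp_0 in H0.
  rewrite Rabs_left1 by lra.
  unfold Wf, sinh, cosh.
  assert (exp x <= 1) by (rewrite <- exp_0; destruct (Rle_lt_or_eq_dec x 0 ltac:(lra)) as [h|h]; [left; apply exp_increasing; auto| rewrite h; lra]).
  assert (1 <= exp (- x)) by (rewrite <- exp_0; destruct (Rle_lt_or_eq_dec 0 (-x) ltac:(lra)) as [h|h]; [left; apply exp_increasing; auto| rewrite h; lra]).
  assert (exp (- x) <= exp (- x0)) by (destruct (Rle_lt_or_eq_dec (-x) (-x0) ltac:(lra)) as [h|h]; [left; apply exp_increasing; auto| rewrite h; lra]).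
  assert (0 < exp x) by apply exp_pos.
  assert (Hm : exp x * exp (- x) = 1) by (rewrite <- exp_plus; replace (x + - x) with 0 by ring; apply exp_0).
  assert (exp x + exp (- x) >= 2) by nra.
  assert (A * exp x >= 0) by nra.
  assert (A * exp (- x) <= A * exp (- x0)) by nra.
  assert (0 <= A * exp (- x0)) by (assert (0 < exp (-x0)) by apply exp_pos; nra).
  lra.
Qed.

Lemma exp_le a b : a <= b -> exp a <= exp b.
Proof.
  intros H. destruct (Rle_lt_or_eq_dec _ _ H) as [h|h]; [left; apply exp_increasing; auto| rewrite h; lra].
Qed.

Lemma Rbar_lt_le_trans' (a : Rbar) (t z : R) : Rbar_lt a t -> t <= z -> Rbar_lt a z.
Proof. destruct a; simpl; intros; lra || auto. Qed.

Lemma cont_le_right (h : R -> R) m0 rho c : continuity_pt h m0 -> 0 < rho ->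
  (forall z, m0 < z < m0 + rho -> h z <= c) -> h m0 <= c.
Proof.
  intros Hc Hr H. destruct (Rle_dec (h m0) c) as [r|n]; auto. exfalso.
  destruct (contpt_ed h m0 (h m0 - c) Hc ltac:(lra)) as [d [Hd Hdd]].
  set (z := m0 + Rmin d rho / 2).
  assert (0 < Rmin d rho) by (apply Rmin_pos; lra).
  assert (Rmin d rho <= d) by apply Rmin_l. assert (Rmin d rho <= rho) by apply Rmin_r.
  assert (Hz : h z <= c) by (apply H; unfold z; lra).
  assert (Hz2 : Rabs (h z - h m0) < h m0 - c) by (apply Hdd; unfold z; rewrite Rabs_right; lra).
  assert (- (h z - h m0) <= Rabs (h z - h m0)) by (rewrite <- Rabs_Ropp; apply RRle_abs). lra.
Qed.

Lemma sq_le_abs (x b : R) : 0 <= b -> x^2 <= b^2 -> Rabs x <= b.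
Proof.
  intros Hb H. apply Rabs_le. split; nra.
Qed.

Lemma lim0_abs (f df : R -> R) C y : y < 0 ->
  (forall z, y <= z < 0 -> is_derive f z (df z)) ->
  (forall z, y <= z < 0 -> Rabs (df z) <= C) ->
  filterlim f (at_left 0) (locally 0) -> Rabs (f y) <= C * (- y).
Proof.
  intros Hy Hd HC Hf. apply Rabs_le. split.
  - assert (H := lim0_bound (fun z => - f z) (fun z => - df z) (- C) 0 y Hy).
    assert (- f y <= 0 + - C * y); [|lra].
    apply H.
    + intros z Hz. apply (is_derive_opp f). apply Hd; auto.
    + intros z Hz. assert (Rabs (df z) <= C) by auto.
      assert (df z <= Rabs (df z)) by apply RRle_abs. lra.
    + assert (Hm := lim_mult _ _ _ _ (lim_const (-1)) Hf).
      rewrite Rmult_0_r in Hm.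
      apply (lim_ext (fun z => -1 * f z)); [intros; ring| exact Hm].
  - assert (H := lim0_bound f df (- C) 0 y Hy Hd).
    assert (f y <= 0 + - C * y); [|lra]. apply H; auto.
    intros z Hz. assert (Rabs (df z) <= C) by auto.
    assert (- df z <= Rabs (df z)) by (rewrite <- Rabs_Ropp; apply RRle_abs). lra.
Qed.

Definition ode_at (A A0 eps : R) (w dw ddw : R -> R) (x : R) : Prop :=
  is_derive w x (dw x) /\ is_derive dw x (ddw x) /\
  (let p := Phi_eps eps (w x) in
   - c_tilde A A0 eps * dw x = (eps + p ^ 2) * ddw x + p * (1 - p ^ 2) * sqrt (eps + p ^ 2)).

Definition ef (A : R) (w : R -> R) (x : R) : R := w x - Wf A x.
Definition Df (A A0 eps : R) (w dw : R -> R) (x : R) : R :=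
  dw x + c_tilde A A0 eps * Hf eps (Phi_eps eps (w x)) - Vf A x - (A0 - A).
Definition Zf (A A0 eps : R) (w dw : R -> R) (x : R) : R :=
  ef A w x ^ 2 + Df A A0 eps w dw x ^ 2.
Definition Ff (A A0 eps : R) (w dw : R -> R) (mu x : R) : R :=
  (Zf A A0 eps w dw x + mu / 4) * exp (4 * x).

Lemma der_eq (f : R -> R) x d d' : is_derive f x d -> d = d' -> is_derive f x d'.
Proof. intros H <-. auto. Qed.

Lemma deriv_e A A0 eps w dw ddw x : 0 < eps -> ode_at A A0 eps w dw ddw x ->
  is_derive (ef A w) x (Df A A0 eps w dw x + Kf A A0 eps (Phi_eps eps (w x))).
Proof.
  intros He [Hw [Hv Ho]]. unfold ef.
  apply der_eq with (d := minus (dw x) (Vf A x)).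
  - apply (is_derive_minus w (Wf A)); auto. apply Wf_deriv.
  - unfold Df, Kf, minus, plus, opp; simpl. ring.
Qed.

Lemma deriv_p eps w dw x : 0 < eps -> is_derive w x (dw x) ->
  is_derive (fun y => Phi_eps eps (w y)) x (dw x * / (2 * sqrt (eps + (Phi_eps eps (w x))^2))).
Proof.
  intros He Hw.
  apply (is_derive_comp (Phi_eps eps) w x); auto. apply Phi_deriv; auto.
Qed.

Lemma deriv_D A A0 eps w dw ddw x : 0 < eps -> ode_at A A0 eps w dw ddw x ->
  is_derive (Df A A0 eps w dw) x (-(gf eps (Phi_eps eps (w x)) + 1 + w x) + ef A w x).
Proof.
  intros He [Hw [Hv Ho]]. unfold Df. simpl in Ho.
  set (c := c_tilde A A0 eps) in *.
  set (p := Phi_eps eps (w x)) in *.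
  assert (Hp := deriv_p eps w dw x He Hw). fold p in Hp.
  assert (HH : is_derive (fun y => Hf eps (Phi_eps eps (w y))) x
                 ((dw x * / (2 * sqrt (eps + p^2))) * (2 / sqrt (eps + p^2)))).
  { apply (is_derive_comp (Hf eps) (fun y => Phi_eps eps (w y)) x); auto. apply Hf_deriv; auto. }
  apply der_eq with (d := minus (minus (plus (ddw x) (c * ((dw x * / (2 * sqrt (eps + p^2))) * (2 / sqrt (eps + p^2))))) (plus 1 (Wf A x))) 0).
  - apply (is_derive_minus (fun y => dw y + c * Hf eps (Phi_eps eps (w y)) - Vf A y) (fun _ => A0 - A)).
    + apply (is_derive_minus (fun y => dw y + c * Hf eps (Phi_eps eps (w y))) (Vf A)).
      * apply (is_derive_plus dw (fun y => c * Hf eps (Phi_eps eps (w y)))); auto.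
        apply is_derive_scal. auto.
      * apply Vf_deriv.
    + apply (@is_derive_const R_AbsRing R_NormedModule).
  - unfold minus, plus, opp, ef, gf; simpl. fold p.
    replace (p * (p * 1)) with (p ^ 2) in * by ring.
    destruct (sqrt_facts eps p He) as (Hs&Hss&_&_&_&_&_).
    set (s := sqrt (eps + p^2)) in *.
    assert (Hd : ddw x = (- c * dw x - p * (1 - p^2) * s) / (s * s)).
    { rewrite Hss. field_simplify; [|nra]. rewrite Ho. field. nra. }
    rewrite Hd. field. lra.
Qed.

Lemma deriv_Z A A0 eps w dw ddw x : 0 < eps -> ode_at A A0 eps w dw ddw x ->
  is_derive (Zf A A0 eps w dw) x
    (2 * ef A w x * (Df A A0 eps w dw x + Kf A A0 eps (Phi_eps eps (w x))) +
     2 * Df A A0 eps w dw x * (-(gf eps (Phi_eps eps (w x)) + 1 + w x) + ef A w x)).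
Proof.
  intros He Hode. unfold Zf.
  assert (H1 := deriv_e A A0 eps w dw ddw x He Hode).
  assert (H2 := deriv_D A A0 eps w dw ddw x He Hode).
  apply der_eq with (d := plus (INR 2 * (Df A A0 eps w dw x + Kf A A0 eps (Phi_eps eps (w x))) * ef A w x ^ Init.Nat.pred 2)
                               (INR 2 * (-(gf eps (Phi_eps eps (w x)) + 1 + w x) + ef A w x) * Df A A0 eps w dw x ^ Init.Nat.pred 2)).
  - apply (is_derive_plus (fun y => ef A w y ^ 2) (fun y => Df A A0 eps w dw y ^ 2)).
    + apply (is_derive_pow (ef A w) 2 x); auto.
    + apply (is_derive_pow (Df A A0 eps w dw) 2 x); auto.
  - unfold plus; simpl. ring.
Qed.

Definition dFf (A A0 eps : R) (w dw : R -> R) (mu x : R) : R :=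
  (2 * ef A w x * (Df A A0 eps w dw x + Kf A A0 eps (Phi_eps eps (w x))) +
   2 * Df A A0 eps w dw x * (-(gf eps (Phi_eps eps (w x)) + 1 + w x) + ef A w x)
   + 4 * (Zf A A0 eps w dw x + mu / 4)) * exp (4 * x).

Lemma deriv_F A A0 eps w dw ddw mu x : 0 < eps -> ode_at A A0 eps w dw ddw x ->
  is_derive (Ff A A0 eps w dw mu) x (dFf A A0 eps w dw mu x).
Proof.
  intros He Hode.
  assert (HZ := deriv_Z A A0 eps w dw ddw x He Hode).
  unfold Ff, dFf.
  set (dZ := 2 * ef A w x * (Df A A0 eps w dw x + Kf A A0 eps (Phi_eps eps (w x))) +
   2 * Df A A0 eps w dw x * (-(gf eps (Phi_eps eps (w x)) + 1 + w x) + ef A w x)) in *.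
  apply der_eq with (d := plus (mult (plus dZ 0) (exp (4 * x))) (mult (Zf A A0 eps w dw x + mu / 4) (4 * exp (4 * x)))).
  + apply (is_derive_mult (fun y => Zf A A0 eps w dw y + mu / 4) (fun y => exp (4 * y))).
    * apply (is_derive_plus (Zf A A0 eps w dw) (fun _ => mu / 4)); auto. apply (@is_derive_const R_AbsRing R_NormedModule).
    * auto_derive; auto. ring.
    * intros; apply Rmult_comm.
  + unfold plus, mult; simpl. ring.
Qed.

Lemma dF_nonneg A A0 eps w dw mu x :
  (Kf A A0 eps (Phi_eps eps (w x)))^2 + (gf eps (Phi_eps eps (w x)) + 1 + w x)^2 <= mu ->
  0 <= dFf A A0 eps w dw mu x.
Proof.
  intros Hmu. unfold dFf.
  apply Rmult_le_pos; [|left; apply exp_pos].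
  unfold Zf.
  set (e := ef A w x) in *. set (D := Df A A0 eps w dw x) in *.
  set (K := Kf A A0 eps (Phi_eps eps (w x))) in *.
  set (r := gf eps (Phi_eps eps (w x)) + 1 + w x) in *.
  assert (0 <= (e + K)^2) by apply pow2_ge_0.
  assert (0 <= (D - r)^2) by apply pow2_ge_0.
  assert (0 <= e^2) by apply pow2_ge_0.
  assert (0 <= D^2) by apply pow2_ge_0.
  assert (0 <= (e + D)^2) by apply pow2_ge_0.
  assert (E : 2 * e * (D + K) + 2 * D * (- r + e) + 4 * (e ^ 2 + D ^ 2 + mu / 4) =
              (e + K)^2 + (D - r)^2 + (e^2 + D^2) + 2 * (e + D)^2 + (mu - K^2 - r^2)) by field.
  replace (- (gf eps (Phi_eps eps (w x)) + 1 + w x)) with (- r) by (unfold r; ring).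
  lra.
Qed.

Lemma lim_e A w : filterlim w (at_left 0) (locally 0) ->
  filterlim (ef A w) (at_left 0) (locally 0).
Proof.
  intros Hw.
  assert (HW := lim_contf (Wf A) (contpt_of_derive _ _ _ (Wf_deriv A 0))).
  rewrite Wf_0 in HW.
  assert (H := lim_plus _ _ _ _ Hw (lim_mult _ _ _ _ (lim_const (-1)) HW)).
  replace (0 + -1 * 0) with 0 in H by ring.
  eapply lim_ext; [|exact H]. intros x; unfold ef; simpl; ring.
Qed.

Lemma lim_D A A0 eps w dw : 0 < eps -> filterlim w (at_left 0) (locally 0) ->
  filterlim dw (at_left 0) (locally A0) ->
  filterlim (Df A A0 eps w dw) (at_left 0) (locally 0).
Proof.
  intros He Hw Hv.
  assert (HP := lim_comp w (Phi_eps eps) 0 Hw (Phi_cont eps He 0)).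
  rewrite Phi_0 in HP by auto.
  assert (HH := lim_comp _ (Hf eps) 0 HP (Hf_cont eps He 0)).
  rewrite Hf_0 in HH by auto.
  assert (HV := lim_contf (Vf A) (contpt_of_derive _ _ _ (Vf_deriv A 0))).
  rewrite Vf_0 in HV.
  assert (H := lim_plus _ _ _ _ (lim_plus _ _ _ _ Hv (lim_mult _ _ _ _ (lim_const (c_tilde A A0 eps)) HH))
                 (lim_plus _ _ _ _ (lim_mult _ _ _ _ (lim_const (-1)) HV) (lim_const (-(A0 - A))))).
  replace (A0 + c_tilde A A0 eps * 0 + (-1 * A + - (A0 - A))) with 0 in H by ring.
  eapply lim_ext; [|exact H]. intros x; unfold Df; simpl; ring.
Qed.

Lemma lim_F A A0 eps w dw mu : 0 < eps -> filterlim w (at_left 0) (locally 0) ->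
  filterlim dw (at_left 0) (locally A0) ->
  filterlim (Ff A A0 eps w dw mu) (at_left 0) (locally (mu / 4)).
Proof.
  intros He Hw Hv.
  assert (He' := lim_e A w Hw). assert (HD := lim_D A A0 eps w dw He Hw Hv).
  assert (HX := lim_comp (fun x => x) (fun x => exp (4 * x)) 0 lim_id
                  (contpt_of_derive (fun x => exp (4 * x)) 0 (4 * exp (4 * 0)) ltac:(auto_derive; auto; try ring))).
  simpl in HX. replace (4 * 0) with 0 in HX by ring. rewrite exp_0 in HX.
  assert (H := lim_mult _ _ _ _ (lim_plus _ _ _ _ (lim_plus _ _ _ _ (lim_mult _ _ _ _ He' He') (lim_mult _ _ _ _ HD HD)) (lim_const (mu / 4))) HX).
  replace ((0 * 0 + 0 * 0 + mu / 4) * 1) with (mu / 4) in H by ring.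
  eapply lim_ext; [|exact H]. intros x; unfold Ff, Zf; simpl; ring.
Qed.

Lemma exp_inv_mul a : exp a * exp (- a) = 1.
Proof. rewrite <- exp_plus. replace (a + - a) with 0 by ring. apply exp_0. Qed.


Lemma contpt_lin (f : R -> R) x d k1 k2 : is_derive f x d ->
  continuity_pt (fun z => k1 * f z + k2 * z) x.
Proof.
  intros H. apply (contpt_of_derive _ x (k1 * d + k2 * 1)).
  apply (is_derive_plus (fun z => k1 * f z) (fun z => k2 * z)).
  - apply is_derive_scal; auto.
  - apply is_derive_scal. apply (@is_derive_id R_AbsRing).
Qed.

Lemma core (A A0 eps : R) (a : Rbar) (w dw ddw : R -> R)
  (x0 tau Tq q m M CD muI mus etab kappa : R) :
  0 < eps < 1 -> 0 < A0 ->
  Rbar_lt a 0 -> w 0 = 0 ->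
  filterlim w (at_left 0) (locally 0) ->
  filterlim dw (at_left 0) (locally A0) ->
  (forall x : R, Rbar_lt a x -> x < 0 -> ode_at A A0 eps w dw ddw x) ->
  x0 <= 0 -> 0 < etab -> 0 <= M -> 0 < m -> 0 < tau -> 0 < Tq -> Tq <= tau -> etab <= kappa / 2 ->
  0 <= muI -> 0 <= mus ->
  (forall y, x0 <= y <= 0 -> Rabs (Wf A y) + etab <= M) ->
  (forall u y, Rabs u <= M -> x0 <= y <= 0 -> Rabs (gf eps (Phi_eps eps u) + 1 + Wf A y) <= CD) ->
  (forall u, Rabs u <= M -> u <= 0 -> 2 * m <= A + Kf A A0 eps (Phi_eps eps u)) ->
  (forall y, - tau <= y <= 0 -> Rabs (Vf A y - A) + CD * (- y) <= m) ->
  (forall y, x0 <= y <= - tau -> Wf A y <= - kappa) ->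
  (forall u, u <= - (kappa / 2) -> Phi_eps eps u <= - q) ->
  (forall u, u <= - (m * Tq) -> Phi_eps eps u <= - q) ->
  (forall u, Rabs u <= M -> (Kf A A0 eps (Phi_eps eps u))^2 + (gf eps (Phi_eps eps u) + 1 + u)^2 <= muI) ->
  (forall u, Rabs u <= M -> Phi_eps eps u <= - q ->
     (Kf A A0 eps (Phi_eps eps u))^2 + (gf eps (Phi_eps eps u) + 1 + u)^2 <= mus) ->
  (muI / 4) * (exp (4 * Tq) - 1) * exp (- 4 * x0) + (mus / 4) * exp (- 4 * x0) <= etab^2 / 4 ->
  forall t : R, Rbar_lt a t -> x0 <= t <= 0 -> forall y, t <= y <= 0 -> Rabs (w y - Wf A y) <= etab / 2.
Proof.
  intros He HA0 Ha0 Hw0 Hwl Hvl Hode Hx0 Hetab HM0 Hm Htau HTq HTqt Hek HmuI0 Hmus0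
    HM HCD Hv HV HB Hq1 Hq2 HmuI Hmus Hgron t Ht Htx.
  assert (He0 : 0 < eps) by lra.
  assert (Hef0 : ef A w 0 = 0) by (unfold ef; rewrite Hw0, Wf_0; ring).
  assert (Hx4 : 1 <= exp (- 4 * x0)) by (rewrite <- exp_0; apply exp_le; lra).
  assert (STEP : forall t' : R, Rbar_lt a t' -> x0 <= t' <= 0 ->
     (forall y, t' <= y <= 0 -> Rabs (ef A w y) <= etab /\ (- tau <= y -> w y <= 0)) ->
     (forall y, t' <= y <= 0 -> Rabs (ef A w y) <= etab / 2 /\ (- tau <= y -> w y <= m * y))).
  { intros t' Ha' Ht' G.
    assert (Hod : forall z, t' <= z < 0 -> ode_at A A0 eps w dw ddw z).
    { intros z Hz. apply Hode; [eapply Rbar_lt_le_trans'; eauto; lra| lra]. }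
    assert (s1 : forall y, t' <= y <= 0 -> Rabs (w y) <= M).
    { intros y Hy. destruct (G y Hy) as [G1 _]. assert (HH := HM y ltac:(lra)).
      unfold ef in G1.
      replace (w y) with ((w y - Wf A y) + Wf A y) by ring.
      eapply Rle_trans; [apply Rabs_triang|]. lra. }
    assert (s3 : forall y, t' <= y < 0 -> Rabs (Df A A0 eps w dw y) <= CD * (- y)).
    { intros y Hy.
      apply (lim0_abs (Df A A0 eps w dw)
               (fun z => -(gf eps (Phi_eps eps (w z)) + 1 + w z) + ef A w z) CD y); try lra.
      - intros z Hz. apply (deriv_D A A0 eps w dw ddw); auto. apply Hod; lra.
      - intros z Hz. unfold ef.
        replace (- (gf eps (Phi_eps eps (w z)) + 1 + w z) + (w z - Wf A z))
          with (- (gf eps (Phi_eps eps (w z)) + 1 + Wf A z)) by ring.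
        rewrite Rabs_Ropp. apply HCD; [apply s1; lra| lra].
      - apply lim_D; auto. }
    assert (s4 : forall z, t' <= z < 0 -> - tau <= z -> m <= dw z).
    { intros z Hz Hzt.
      assert (E : dw z = Df A A0 eps w dw z + (Vf A z - A) + (A + Kf A A0 eps (Phi_eps eps (w z))))
        by (unfold Df, Kf; ring).
      assert (H1 := s3 z Hz).
      assert (H2 := HV z ltac:(lra)).
      assert (H3 := Hv (w z) (s1 z ltac:(lra)) (proj2 (G z ltac:(lra)) Hzt)).
      assert (- Rabs (Df A A0 eps w dw z) <= Df A A0 eps w dw z) by (rewrite <- Rabs_Ropp; apply Rle_trans with (- - Df A A0 eps w dw z); [apply Ropp_le_contravar; apply RRle_abs| lra]).
      assert (- Rabs (Vf A z - A) <= Vf A z - A) by (rewrite <- Rabs_Ropp; apply Rle_trans with (- - (Vf A z - A)); [apply Ropp_le_contravar; apply RRle_abs| lra]).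
      lra. }
    assert (s5 : forall y, t' <= y <= 0 -> - tau <= y -> w y <= m * y).
    { intros y Hy Hyt. destruct (Req_dec y 0) as [->|Hy0]; [rewrite Hw0; lra|].
      assert (HH := lim0_bound w dw m 0 y ltac:(lra)).
      assert (w y <= 0 + m * y); [|lra].
      apply HH; auto.
      - intros z Hz. destruct (Hod z ltac:(lra)) as [Hd _]. auto.
      - intros z Hz. apply s4; lra. }
    assert (s6 : forall y, t' <= y <= - Tq -> Phi_eps eps (w y) <= - q).
    { intros y Hy. destruct (Rle_dec (- tau) y) as [h|h].
      - apply Hq2. assert (HH := s5 y ltac:(lra) h). nra.
      - apply Hq1. destruct (G y ltac:(lra)) as [G1 _]. unfold ef in G1.
        assert (HH := HB y ltac:(lra)).
        assert (w y - Wf A y <= Rabs (w y - Wf A y)) by apply RRle_abs. lra. }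
    assert (B1 : forall z, t' <= z < 0 -> 0 <= dFf A A0 eps w dw muI z).
    { intros z Hz. apply dF_nonneg. apply HmuI. apply s1; lra. }
    assert (B2 : forall z, t' <= z <= - Tq -> 0 <= dFf A A0 eps w dw mus z).
    { intros z Hz. apply dF_nonneg. apply Hmus; [apply s1; lra| apply s6; lra]. }
    assert (P1 : forall y, t' <= y < 0 -> - Tq <= y ->
                 Zf A A0 eps w dw y <= muI / 4 * (exp (4 * Tq) - 1)).
    { intros y Hy Hyq.
      assert (HH := lim0_bound (Ff A A0 eps w dw muI) (dFf A A0 eps w dw muI) 0 (muI / 4) y ltac:(lra)).
      assert (HF : Ff A A0 eps w dw muI y <= muI / 4 + 0 * y).
      { apply HH.
        - intros z Hz. apply (deriv_F A A0 eps w dw ddw); auto. apply Hod; lra.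
        - intros z Hz. apply B1; lra.
        - apply lim_F; auto. }
      unfold Ff in HF.
      assert (HX := exp_inv_mul (4 * y)).
      assert (Hp1 : 0 < exp (4 * y)) by apply exp_pos.
      assert (Hp2 : 0 < exp (- (4 * y))) by apply exp_pos.
      assert (Hp3 : exp (- (4 * y)) <= exp (4 * Tq)) by (apply exp_le; lra).
      assert (HZ : Zf A A0 eps w dw y + muI / 4 <= muI / 4 * exp (- (4 * y))).
      { apply (Rmult_le_reg_r (exp (4 * y))); auto.
        replace (muI / 4 * exp (- (4 * y)) * exp (4 * y)) with (muI / 4) by (rewrite Rmult_assoc, (Rmult_comm (exp _)), HX; ring).
        lra. }
      assert (muI / 4 * exp (- (4 * y)) <= muI / 4 * exp (4 * Tq)) by (apply Rmult_le_compat_l; lra).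
      lra. }
    assert (Z1 : forall y, t' <= y < 0 -> Zf A A0 eps w dw y <= etab^2 / 4).
    { intros y Hy.
      assert (Hq4 : 0 <= muI / 4 * (exp (4 * Tq) - 1)).
      { apply Rmult_le_pos; [lra|]. assert (1 <= exp (4 * Tq)) by (rewrite <- exp_0; apply exp_le; lra). lra. }
      assert (Hcmp : muI / 4 * (exp (4 * Tq) - 1) <= muI / 4 * (exp (4 * Tq) - 1) * exp (- 4 * x0)).
      { rewrite <- (Rmult_1_r (muI / 4 * (exp (4 * Tq) - 1))) at 1. apply Rmult_le_compat_l; lra. }
      assert (Hmus' : 0 <= mus / 4 * exp (- 4 * x0)).
      { apply Rmult_le_pos; [lra| left; apply exp_pos]. }
      destruct (Rle_dec (- Tq) y) as [h|h].
      - assert (HH := P1 y Hy h). lra.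
      -
        assert (HTy : t' <= - Tq) by lra.
        assert (HZT := P1 (- Tq) ltac:(lra) ltac:(lra)).
        assert (HF : Ff A A0 eps w dw mus y <= Ff A A0 eps w dw mus (- Tq)).
        { apply (mono_le (Ff A A0 eps w dw mus) (dFf A A0 eps w dw mus)); [lra| |].
          - intros z Hz. apply (deriv_F A A0 eps w dw ddw); auto. apply Hod; lra.
          - intros z Hz. apply B2; lra. }
        unfold Ff in HF.
        assert (HZ0 : 0 <= Zf A A0 eps w dw (- Tq)) by (unfold Zf; assert (H1 := pow2_ge_0 (ef A w (-Tq))); assert (H2 := pow2_ge_0 (Df A A0 eps w dw (-Tq))); lra).
        assert (Hq5 : exp (4 * - Tq) <= 1) by (rewrite <- exp_0; apply exp_le; lra).
        assert (HF2 : (Zf A A0 eps w dw y + mus / 4) * exp (4 * y) <= Zf A A0 eps w dw (- Tq) + mus / 4).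
        { eapply Rle_trans; [exact HF|].
          rewrite <- (Rmult_1_r (Zf A A0 eps w dw (- Tq) + mus / 4)) at 2.
          apply Rmult_le_compat_l; lra. }
        assert (HX := exp_inv_mul (4 * y)).
        assert (Hp1 : 0 < exp (4 * y)) by apply exp_pos.
        assert (Hp3 : exp (- (4 * y)) <= exp (- 4 * x0)) by (apply exp_le; lra).
        assert (HZ : Zf A A0 eps w dw y + mus / 4 <= (Zf A A0 eps w dw (- Tq) + mus / 4) * exp (- (4 * y))).
        { apply (Rmult_le_reg_r (exp (4 * y))); auto.
          replace ((Zf A A0 eps w dw (- Tq) + mus / 4) * exp (- (4 * y)) * exp (4 * y))
            with (Zf A A0 eps w dw (- Tq) + mus / 4) by (rewrite Rmult_assoc, (Rmult_comm (exp _)), HX; ring).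
          lra. }
        assert ((Zf A A0 eps w dw (- Tq) + mus / 4) * exp (- (4 * y)) <=
                (muI / 4 * (exp (4 * Tq) - 1) + mus / 4) * exp (- 4 * x0)).
        { apply Rmult_le_compat; try lra. left; apply exp_pos. }
        lra. }
    intros y Hy. split; [|apply s5; auto].
    destruct (Req_dec y 0) as [->|Hy0]; [rewrite Hef0, Rabs_R0; lra|].
    apply sq_le_abs; [lra|].
    assert (HZ := Z1 y ltac:(lra)). unfold Zf in HZ.
    assert (H2 := pow2_ge_0 (Df A A0 eps w dw y)).
    replace ((etab / 2)^2) with (etab^2 / 4) by field. lra. }
  assert (Hodt : forall z, t <= z < 0 -> ode_at A A0 eps w dw ddw z).
  { intros z Hz. apply Hode; [eapply Rbar_lt_le_trans'; eauto; lra| lra]. }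
  assert (IND : forall y, t <= y <= 0 ->
            Rabs (ef A w y) <= etab / 2 /\ (- tau <= y -> w y <= m * y)).
  { apply real_ind; [lra| |  | ].
    - split; [rewrite Hef0, Rabs_R0; lra| rewrite Hw0; lra].
    - intros m0 Hm0 Hright.
      destruct (Hodt m0 Hm0) as [Hdw _].
      assert (Hde := deriv_e A A0 eps w dw ddw m0 He0 (Hodt m0 Hm0)).
      split.
      + apply Rabs_le. split.
        * assert (HH : -1 * ef A w m0 + 0 * m0 <= etab / 2).
          { apply (cont_le_right (fun z => -1 * ef A w z + 0 * z) m0 (- m0)).
            - eapply contpt_lin; eauto.
            - lra.
            - intros z Hz. destruct (Hright z ltac:(lra)) as [H1 _].
              assert (- ef A w z <= Rabs (ef A w z)) by (rewrite <- Rabs_Ropp; apply RRle_abs). lra. }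
          lra.
        * assert (HH : 1 * ef A w m0 + 0 * m0 <= etab / 2).
          { apply (cont_le_right (fun z => 1 * ef A w z + 0 * z) m0 (- m0)).
            - eapply contpt_lin; eauto.
            - lra.
            - intros z Hz. destruct (Hright z ltac:(lra)) as [H1 _].
              assert (ef A w z <= Rabs (ef A w z)) by apply RRle_abs. lra. }
          lra.
      + intros Hmt.
        assert (HH : 1 * w m0 + (- m) * m0 <= 0).
        { apply (cont_le_right (fun z => 1 * w z + (- m) * z) m0 (- m0)).
          - eapply contpt_lin; eauto.
          - lra.
          - intros z Hz. destruct (Hright z ltac:(lra)) as [_ H2].
            assert (w z <= m * z) by (apply H2; lra). lra. }
        lra.
    - intros m0 Hm0 Hall.
      assert (GOAL : exists t'' : R, (t <= t'' < m0) /\ (forall z, t'' <= z <= 0 -> Rabs (ef A w z) <= etab /\ (- tau <= z -> w z <= 0))).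
      { destruct (Req_dec m0 0) as [Hz0|Hz0].
        - subst m0.
          destruct (at_left_ex (ef A w) 0 etab Hetab (lim_e A w Hwl)) as [d1 [Hd1 Hdd1]].
          destruct (at_left_ex dw A0 (A0 / 2) ltac:(lra) Hvl) as [d2 [Hd2 Hdd2]].
          assert (0 < Rmin d1 d2) by (apply Rmin_pos; lra).
          assert (Rmin d1 d2 <= d1) by apply Rmin_l. assert (Rmin d1 d2 <= d2) by apply Rmin_r.
          exists (Rmax t (- Rmin d1 d2 / 2)).
          assert (t <= Rmax t (- Rmin d1 d2 / 2)) by apply Rmax_l.
          assert (- Rmin d1 d2 / 2 <= Rmax t (- Rmin d1 d2 / 2)) by apply Rmax_r.
          split; [split; auto; apply Rmax_lub_lt; lra|].
          intros z Hz. destruct (Req_dec z 0) as [->|Hzn].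
          + rewrite Hef0, Rabs_R0, Hw0. split; lra.
          + split.
            * assert (HH := Hdd1 z ltac:(lra)). rewrite Rminus_0_r in HH. lra.
            * intros _. assert (HH := lim0_bound w dw 0 0 z ltac:(lra)).
              assert (w z <= 0 + 0 * z); [|lra].
              apply HH; auto.
              -- intros z' Hz'. destruct (Hodt z' ltac:(lra)) as [Hd _]. auto.
              -- intros z' Hz'. assert (H5 := Hdd2 z' ltac:(lra)).
                 assert (- (dw z' - A0) <= Rabs (dw z' - A0)) by (rewrite <- Rabs_Ropp; apply RRle_abs). lra.
        - assert (Hm0' : m0 < 0) by lra.
          destruct (Hodt m0 ltac:(lra)) as [Hdw _].
          assert (Hde := deriv_e A A0 eps w dw ddw m0 He0 (Hodt m0 ltac:(lra))).
          destruct (contpt_ed (ef A w) m0 (etab / 2) (contpt_of_derive _ _ _ Hde) ltac:(lra)) as [d1 [Hd1 Hdd1]].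
          assert (Hd2e : exists d2, 0 < d2 /\ forall z, Rabs (z - m0) < d2 -> - tau <= z -> z < m0 -> w z <= 0).
          { destruct (Rlt_dec (- tau) m0) as [h|h].
            - destruct (Hall m0 ltac:(lra)) as [_ Hw'].
              assert (Hwm := Hw' ltac:(lra)).
              destruct (contpt_ed w m0 (- (m * m0)) (contpt_of_derive _ _ _ Hdw) ltac:(nra)) as [d2 [Hd2 Hdd2]].
              exists d2. split; auto. intros z Hz _ _. assert (HH := Hdd2 z Hz).
              assert (w z - w m0 <= Rabs (w z - w m0)) by apply RRle_abs. lra.
            - exists 1. split; [lra|]. intros z _ Hz1 Hz2. lra. }
          destruct Hd2e as [d2 [Hd2 Hdd2]].
          assert (0 < Rmin d1 d2) by (apply Rmin_pos; lra).
          assert (Rmin d1 d2 <= d1) by apply Rmin_l. assert (Rmin d1 d2 <= d2) by apply Rmin_r.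
          exists (Rmax t (m0 - Rmin d1 d2 / 2)).
          assert (t <= Rmax t (m0 - Rmin d1 d2 / 2)) by apply Rmax_l.
          assert (m0 - Rmin d1 d2 / 2 <= Rmax t (m0 - Rmin d1 d2 / 2)) by apply Rmax_r.
          split; [split; auto; apply Rmax_lub_lt; lra|].
          intros z Hz. destruct (Rle_dec m0 z) as [h|h].
          + destruct (Hall z ltac:(lra)) as [HA1 HA2]. split; [lra|].
            intros Hzt. assert (w z <= m * z) by auto. assert (m * z <= 0) by nra. lra.
          + assert (Hzd : Rabs (z - m0) < Rmin d1 d2) by (rewrite Rabs_left; lra).
            split.
            * assert (HH := Hdd1 z ltac:(lra)).
              destruct (Hall m0 ltac:(lra)) as [HA1 _].
              replace (ef A w z) with (ef A w m0 + (ef A w z - ef A w m0)) by ring.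
              eapply Rle_trans; [apply Rabs_triang|]. lra.
            * intros Hzt. apply Hdd2; lra. }
      destruct GOAL as [t'' [Ht1 Ht2]].
      exists t''. split; auto.
      apply STEP; auto; [eapply Rbar_lt_le_trans'; eauto; lra| lra]. }
  intros y Hy. destruct (IND y Hy) as [H1 _]. exact H1.
Qed.

Lemma eps_small N sigma : 0 < sigma -> exists delta, 0 < delta /\
  forall eps, 0 < eps -> eps < delta -> N <= - ln eps /\ eps <= sigma /\ sqrt eps <= sigma.
Proof.
  intros Hs. exists (Rmin (exp (- N)) (Rmin sigma (sigma^2))).
  assert (H1 := exp_pos (- N)).
  split; [apply Rmin_pos; [auto| apply Rmin_pos; nra]|].
  intros eps He Hd.
  assert (Hd1 : eps < exp (- N)) by (eapply Rlt_le_trans; [exact Hd| apply Rmin_l]).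
  assert (Hd2 : eps < Rmin sigma (sigma^2)) by (eapply Rlt_le_trans; [exact Hd| apply Rmin_r]).
  assert (Hd3 : eps < sigma) by (eapply Rlt_le_trans; [exact Hd2| apply Rmin_l]).
  assert (Hd4 : eps < sigma^2) by (eapply Rlt_le_trans; [exact Hd2| apply Rmin_r]).
  split; [|split].
  - assert (ln eps < ln (exp (- N))) by (apply ln_increasing; auto).
    rewrite ln_exp in H. lra.
  - lra.
  - rewrite <- (sqrt_pow2 sigma) by lra. apply sqrt_le_1_alt. lra.
Qed.

Lemma main_conv (A A0 x0 eta : R) : 0 < A -> 0 < A0 -> x0 <= 0 ->
  0 < (1 + A) * exp x0 - (1 - A) -> 0 < eta ->
  exists delta, 0 < delta /\
  forall eps (a : Rbar) (w dw ddw : R -> R), 0 < eps -> eps < 1 -> eps < delta ->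
    is_shooting_solution A A0 eps a w dw ddw ->
    Rbar_lt a x0 /\ forall x, x0 <= x <= 0 -> Rabs (w x - w_tilde A x) < eta.
Proof.
  intros HA HA0 Hx0 Hb Heta.
  set (beta := (1 + A) * exp x0 - (1 - A)) in *.
  set (MW := A * exp (- x0)).
  assert (HMW : 0 <= MW) by (unfold MW; assert (0 < exp (-x0)) by apply exp_pos; nra).
  set (m := Rmin A A0 / 4).
  assert (Hmin : 0 < Rmin A A0) by (apply Rmin_pos; lra).
  assert (Hm : 0 < m) by (unfold m; lra).
  set (M := MW + 1). set (P := M + 1).
  set (CD := 2 + M + MW).
  assert (HV0 := contpt_of_derive _ _ _ (Vf_deriv A 0)).
  destruct (contpt_ed (Vf A) 0 (m / 2) HV0 ltac:(lra)) as [dV [HdV HdVV]].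
  rewrite Vf_0 in HdVV.
  set (tau := Rmin (dV / 2) (m / (2 * (CD + 1)))).
  assert (Htau : 0 < tau) by (unfold tau; apply Rmin_pos; [lra| apply Rdiv_lt_0_compat; unfold CD, M; lra]).
  assert (Htau1 : tau <= dV / 2) by apply Rmin_l.
  assert (Htau2 : tau <= m / (2 * (CD + 1))) by apply Rmin_r.
  set (kappa := (1 - exp (- tau)) * beta / 2).
  assert (Hk : 0 < kappa).
  { unfold kappa. assert (exp (- tau) < 1) by (rewrite <- exp_0; apply exp_increasing; lra).
    apply Rdiv_lt_0_compat; [|lra]. apply Rmult_lt_0_compat; lra. }
  set (etab := Rmin eta (Rmin (kappa / 2) 1)).
  assert (Hetab : 0 < etab) by (unfold etab; repeat apply Rmin_pos; lra).
  assert (He1 : etab <= eta) by apply Rmin_l.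
  assert (He2 : etab <= kappa / 2) by (eapply Rle_trans; [apply Rmin_r| apply Rmin_l]).
  assert (He3 : etab <= 1) by (eapply Rle_trans; [apply Rmin_r| apply Rmin_r]).
  set (muI := 9 * (A - A0)^2 + (2 + 2 * M)^2).
  assert (HmuI0 : 0 <= muI) by (unfold muI; assert (H1 := pow2_ge_0 (A - A0)); assert (H2 := pow2_ge_0 (2 + 2 * M)); lra).
  set (theta := etab^2 / (2 * (muI + 1) * exp (- 4 * x0))).
  assert (Hth : 0 < theta).
  { unfold theta. apply Rdiv_lt_0_compat; [nra|]. assert (0 < exp (-4 * x0)) by apply exp_pos. nra. }
  set (T1 := Rmin tau (ln (1 + theta) / 4)).
  assert (HT1 : 0 < T1).
  { unfold T1. apply Rmin_pos; auto. assert (0 < ln (1 + theta)) by (rewrite <- ln_1; apply ln_increasing; lra). lra. }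
  assert (HT1a : T1 <= tau) by apply Rmin_l.
  assert (HT1b : T1 <= ln (1 + theta) / 4) by apply Rmin_r.
  set (q := Rmin 1 (Rmin (m * T1 / 4) (kappa / 8))).
  assert (Hq : 0 < q) by (unfold q; repeat apply Rmin_pos; nra).
  assert (Hq1 : q <= 1) by apply Rmin_l.
  assert (Hq2 : q <= m * T1 / 4) by (eapply Rle_trans; [apply Rmin_r| apply Rmin_l]).
  assert (Hq3 : q <= kappa / 8) by (eapply Rle_trans; [apply Rmin_r| apply Rmin_r]).
  set (Tq := 4 * q^2 / m).
  assert (HTq : 0 < Tq) by (unfold Tq; apply Rdiv_lt_0_compat; nra).
  assert (HTq1 : Tq <= T1).
  { unfold Tq. apply (Rmult_le_reg_r m); auto. field_simplify; [|lra]. nra. }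
  set (ks := etab * exp (2 * x0) / 2).
  assert (Hks : 0 < ks) by (unfold ks; assert (0 < exp (2 * x0)) by apply exp_pos; nra).
  set (mus := 2 * ks^2).
  set (N := 2 * ln (2 * P + 1) + Rabs (A - A0) * 2 * ln (2 * P + 1) / (Rmin A A0 / 2)
            + Rabs (A - A0) * 2 * (ln (2 * P + 1) - ln q) / ks).
  set (sigma := Rmin (Rmin (kappa / 4) (2 * q^2)) (ks / ((1 + P^2) / q + 2 * P))).
  assert (HP : 1 <= P) by (unfold P, M; lra).
  assert (Hsig : 0 < sigma).
  { unfold sigma. apply Rmin_pos; [apply Rmin_pos; nra|]. apply Rdiv_lt_0_compat; auto.
    assert (0 < (1 + P^2) / q) by (apply Rdiv_lt_0_compat; nra). lra. }
  destruct (eps_small N sigma Hsig) as [delta [Hdel Hdd]].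
  exists delta. split; auto.
  intros eps a w dw ddw He0 He1' Hed Hsol.
  destruct (Hdd eps He0 Hed) as [HL [Hes Hsq]].
  assert (Hes1 : eps <= kappa / 4) by (eapply Rle_trans; [exact Hes| unfold sigma; eapply Rle_trans; [apply Rmin_l| apply Rmin_l]]).
  assert (Hes2 : eps <= 2 * q^2) by (eapply Rle_trans; [exact Hes| unfold sigma; eapply Rle_trans; [apply Rmin_l| apply Rmin_r]]).
  assert (Hsq2 : sqrt eps <= ks / ((1 + P^2) / q + 2 * P)) by (eapply Rle_trans; [exact Hsq| unfold sigma; apply Rmin_r]).
  assert (Hln : ln eps < 0) by (rewrite <- ln_1; apply ln_increasing; lra).
  set (L := - ln eps) in *.
  assert (HL0 : 0 < L) by (unfold L; lra).
  assert (HlnP : 0 <= ln (2 * P + 1)) by (rewrite <- ln_1; apply ln_le'; lra).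
  assert (Hlnq : ln q <= 0) by (rewrite <- ln_1; apply ln_le'; lra).
  assert (HAA : 0 <= Rabs (A - A0)) by apply Rabs_pos.
  assert (T2 : 0 <= Rabs (A - A0) * 2 * ln (2 * P + 1) / (Rmin A A0 / 2)).
  { apply Rdiv_le_0_compat; [|lra]. nra. }
  assert (T3 : 0 <= Rabs (A - A0) * 2 * (ln (2 * P + 1) - ln q) / ks).
  { apply Rdiv_le_0_compat; [|lra]. nra. }
  assert (c1 : 2 * ln (2 * P + 1) <= L) by (unfold N in HL; lra).
  assert (c2 : Rabs (A - A0) * (2 * ln (2 * P + 1) / L) <= Rmin A A0 / 2).
  { assert (Rabs (A - A0) * 2 * ln (2 * P + 1) / (Rmin A A0 / 2) <= L) by (unfold N in HL; lra).
    apply (Rmult_le_reg_r L); auto.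
    replace (Rabs (A - A0) * (2 * ln (2 * P + 1) / L) * L) with (Rabs (A - A0) * 2 * ln (2 * P + 1)) by (field; lra).
    apply (Rmult_le_reg_r (/ (Rmin A A0 / 2))); [apply Rinv_0_lt_compat; lra|].
    replace (Rmin A A0 / 2 * L * / (Rmin A A0 / 2)) with L by (field; lra).
    exact H. }
  assert (c3 : Rabs (A - A0) * (2 * (ln (2 * P + 1) - ln q) / L) <= ks).
  { assert (Rabs (A - A0) * 2 * (ln (2 * P + 1) - ln q) / ks <= L) by (unfold N in HL; lra).
    apply (Rmult_le_reg_r L); auto.
    replace (Rabs (A - A0) * (2 * (ln (2 * P + 1) - ln q) / L) * L) with (Rabs (A - A0) * 2 * (ln (2 * P + 1) - ln q)) by (field; lra).
    apply (Rmult_le_reg_r (/ ks)); [apply Rinv_0_lt_compat; lra|].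
    replace (ks * L * / ks) with L by (field; lra).
    exact H. }
  assert (c4 : sqrt eps * ((1 + P^2) / q + 2 * P) <= ks).
  { assert (0 < (1 + P^2) / q + 2 * P) by (assert (0 < (1 + P^2) / q) by (apply Rdiv_lt_0_compat; nra); lra).
    apply (Rmult_le_reg_r (/ ((1 + P^2) / q + 2 * P))); [apply Rinv_0_lt_compat; lra|].
    replace (sqrt eps * ((1 + P ^ 2) / q + 2 * P) * / ((1 + P ^ 2) / q + 2 * P)) with (sqrt eps) by (rewrite Rmult_assoc, Rinv_r; [ring| lra]).
    exact Hsq2. }
  destruct Hsol as (Ha0 & Hw0 & Hwl & Hvl & Hode & Hmax).
  assert (HepsI : 0 < eps < 1) by lra.
  assert (HQ : forall t : R, Rbar_lt a t -> x0 <= t <= 0 -> forall y, t <= y <= 0 -> Rabs (w y - Wf A y) <= etab / 2).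
  { apply (core A A0 eps a w dw ddw x0 tau Tq q m M CD muI mus etab kappa); auto; try lra.
    - exact Hode.
    - unfold M; lra.
    - unfold mus; assert (H1 := pow2_ge_0 ks); lra.
    - intros y Hy. assert (HH := Wf_abs A x0 y HA Hb Hy). fold MW in HH. unfold M. lra.
    - intros u y Hu Hy. destruct (Phi_rel eps He0 u) as (H1 & _ & _ & _).
      assert (H2 := gf_crude eps (Phi_eps eps u) He0).
      assert (HH := Wf_abs A x0 y HA Hb Hy). fold MW in HH.
      eapply Rle_trans; [apply Rabs_triang|].
      eapply Rle_trans; [apply Rplus_le_compat_r; apply Rabs_triang|].
      rewrite Rabs_R1. unfold CD. lra.
    - intros u Hu Hu0.
      assert (Hp0 := Phi_nonpos eps He0 u Hu0).
      assert (HpP := Phi_bound eps He0 M u ltac:(unfold M; lra) Hu). fold P in HpP.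
      assert (HH := Kf_v A A0 eps P (Phi_eps eps u) HepsI ltac:(lra) Hp0 HpP).
      fold L in HH. unfold m. lra.
    - intros y Hy.
      assert (HH := HdVV y ltac:(rewrite Rminus_0_r, Rabs_left1; lra)).
      assert (CD * - y <= m / 2).
      { assert (0 <= CD) by (unfold CD, M; lra).
        assert (CD * - y <= CD * tau) by (apply Rmult_le_compat_l; lra).
        assert (CD * tau <= CD * (m / (2 * (CD + 1)))) by (apply Rmult_le_compat_l; lra).
        assert (CD * (m / (2 * (CD + 1))) <= m / 2).
        { apply (Rmult_le_reg_r (2 * (CD + 1))); [lra|]. field_simplify; lra. }
        lra. }
      lra.
    - intros y Hy. assert (HH := Wf_neg A x0 y tau HA Hb ltac:(lra) ltac:(lra) ltac:(lra)).
      fold beta in HH. unfold kappa. lra.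
    - intros u Hu. apply (Phi_le_q eps He0); [lra|]. nra.
    - intros u Hu. apply (Phi_le_q eps He0); [lra|]. unfold Tq in Hu.
      replace (m * (4 * q ^ 2 / m)) with (4 * q^2) in Hu by (field; lra). lra.
    - intros u Hu.
      assert (HpP := Phi_bound eps He0 M u ltac:(unfold M; lra) Hu). fold P in HpP.
      assert (HK := Kf_crude A A0 eps P (Phi_eps eps u) HepsI ltac:(lra) c1 HpP).
      destruct (Phi_rel eps He0 u) as (H1 & _ & _ & _).
      assert (H2 := gf_crude eps (Phi_eps eps u) He0).
      assert (Hr : Rabs (gf eps (Phi_eps eps u) + 1 + u) <= 2 + 2 * M).
      { eapply Rle_trans; [apply Rabs_triang|].
        eapply Rle_trans; [apply Rplus_le_compat_r; apply Rabs_triang|].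
        rewrite Rabs_R1. lra. }
      unfold muI.
      assert (E1 : Kf A A0 eps (Phi_eps eps u) ^ 2 = Rabs (Kf A A0 eps (Phi_eps eps u)) ^ 2)
        by (rewrite <- !Rsqr_pow2; apply Rsqr_abs).
      assert (E2 : (gf eps (Phi_eps eps u) + 1 + u) ^ 2 = Rabs (gf eps (Phi_eps eps u) + 1 + u) ^ 2)
        by (rewrite <- !Rsqr_pow2; apply Rsqr_abs).
      assert (E3 : (A - A0) ^ 2 = Rabs (A - A0) ^ 2) by (rewrite <- !Rsqr_pow2; apply Rsqr_abs).
      rewrite E1, E2, E3.
      assert (0 <= Rabs (Kf A A0 eps (Phi_eps eps u))) by apply Rabs_pos.
      assert (0 <= Rabs (gf eps (Phi_eps eps u) + 1 + u)) by apply Rabs_pos.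
      nra.
    - intros u Hu Hpq.
      assert (HpP := Phi_bound eps He0 M u ltac:(unfold M; lra) Hu). fold P in HpP.
      assert (HK := Kf_small A A0 eps P q (Phi_eps eps u) HepsI ltac:(lra) Hpq HpP).
      fold L in HK.
      assert (Hr := r_small eps q P u He0 Hq Hpq HpP).
      assert (E1 : Kf A A0 eps (Phi_eps eps u) ^ 2 = Rabs (Kf A A0 eps (Phi_eps eps u)) ^ 2)
        by (rewrite <- !Rsqr_pow2; apply Rsqr_abs).
      assert (E2 : (gf eps (Phi_eps eps u) + 1 + u) ^ 2 = Rabs (gf eps (Phi_eps eps u) + 1 + u) ^ 2)
        by (rewrite <- !Rsqr_pow2; apply Rsqr_abs).
      rewrite E1, E2. unfold mus.
      assert (0 <= Rabs (Kf A A0 eps (Phi_eps eps u))) by apply Rabs_pos.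
      assert (0 <= Rabs (gf eps (Phi_eps eps u) + 1 + u)) by apply Rabs_pos.
      assert (Rabs (Kf A A0 eps (Phi_eps eps u)) <= ks) by lra.
      assert (Rabs (gf eps (Phi_eps eps u) + 1 + u) <= ks) by lra.
      nra.
    - assert (Hx1 : exp (4 * Tq) <= 1 + theta).
      { rewrite <- (exp_ln (1 + theta)) by lra. apply exp_le. lra. }
      assert (Hx2 : 1 <= exp (4 * Tq)) by (rewrite <- exp_0; apply exp_le; lra).
      assert (Hx3 : 0 < exp (-4 * x0)) by apply exp_pos.
      assert (P1 : muI / 4 * (exp (4 * Tq) - 1) * exp (-4 * x0) <= muI / 4 * theta * exp (-4 * x0)).
      { apply Rmult_le_compat_r; [lra|]. apply Rmult_le_compat_l; lra. }
      assert (P2 : muI / 4 * theta * exp (-4 * x0) <= etab^2 / 8).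
      { replace (muI / 4 * theta * exp (-4 * x0)) with (etab^2 / 8 * (muI / (muI + 1)))
          by (unfold theta; field; split; lra).
        assert (muI / (muI + 1) <= 1).
        { apply (Rmult_le_reg_r (muI + 1)); [lra|]. field_simplify; lra. }
        assert (0 <= etab^2) by apply pow2_ge_0.
        assert (etab ^ 2 / 8 * (muI / (muI + 1)) <= etab ^ 2 / 8 * 1) by (apply Rmult_le_compat_l; lra).
        lra. }
      assert (P3 : mus / 4 * exp (-4 * x0) = etab^2 / 8).
      { unfold mus, ks.
        assert (Hm2 : exp (2 * x0) * exp (2 * x0) * exp (-4 * x0) = 1).
        { rewrite <- !exp_plus. replace (2 * x0 + 2 * x0 + -4 * x0) with 0 by ring. apply exp_0. }
        replace (2 * (etab * exp (2 * x0) / 2) ^ 2 / 4 * exp (-4 * x0))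
          with (etab^2 / 8 * (exp (2 * x0) * exp (2 * x0) * exp (-4 * x0))) by (field).
        rewrite Hm2. ring. }
      lra. }
  assert (Hbound : forall y, x0 <= y <= 0 -> Wf A y <= 0).
  { intros y Hy. assert (HH := Wf_neg A x0 y 0 HA Hb ltac:(lra) ltac:(lra) ltac:(lra)).
    rewrite Ropp_0, exp_0 in HH. fold beta in HH. lra. }
  assert (Hax : Rbar_lt a x0).
  { destruct a as [al| |]; simpl in *; auto.
    destruct (Rlt_dec al x0) as [h|h]; auto. exfalso.
    destruct Hmax as [Hmi|Hmx]; [discriminate|].
    apply Hmx. exists M. intros xb Hx1 Hx2.
    destruct xb as [x| |]; simpl in Hx1, Hx2 |- *; [| rewrite Hw0, Rabs_R0; unfold M; lra | contradiction].
    assert (HH := HQ x Hx1 ltac:(lra) x ltac:(lra)).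
    assert (HW := Wf_abs A x0 x HA Hb ltac:(lra)). fold MW in HW.
    replace (w x) with ((w x - Wf A x) + Wf A x) by ring.
    eapply Rle_trans; [apply Rabs_triang|]. unfold M. lra. }
  split; auto.
  intros x Hx. assert (HH := HQ x0 Hax ltac:(lra) x Hx).
  unfold w_tilde. fold (Wf A x). rewrite Rmin_left by (apply Hbound; auto).
  lra.
Qed.

Lemma w_tilde_0 A : w_tilde A 0 = 0.
Proof.
  unfold w_tilde. replace (A * sinh 0 + cosh 0 - 1) with (Wf A 0) by reflexivity.
  rewrite Wf_0. apply Rmin_left. lra.
Qed.

Lemma conv_gen (A A0 : R) (L : Rbar) (a : R -> Rbar) (w dw ddw : R -> R -> R) :
  0 < A -> 0 < A0 ->
  (forall eps, 0 < eps < 1 ->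
     is_shooting_solution A A0 eps (a eps) (w eps) (dw eps) (ddw eps)) ->
  (forall x0 : R, Rbar_lt L x0 -> x0 <= 0 -> 0 < (1 + A) * exp x0 - (1 - A)) ->
  cloc_conv L a w (w_tilde A).
Proof.
  intros HA HA0 Hsol Hb. unfold cloc_conv.
  intros x0 Hx0 Hx0le eta Heta.
  destruct x0 as [x0| |].
  - destruct (main_conv A A0 x0 eta HA HA0 Hx0le (Hb x0 Hx0 Hx0le) Heta) as [d [Hd H]].
    exists d. split; auto. intros eps He0 He1 Hed.
    assert (Hs := Hsol eps ltac:(lra)).
    exact (H eps (a eps) (w eps) (dw eps) (ddw eps) He0 He1 Hed Hs).
  - exists 1. split; [lra|]. intros eps He0 He1 Hed.
    destruct (Hsol eps ltac:(lra)) as (Ha0 & Hw0 & _).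
    split.
    + destruct (a eps); simpl in *; auto.
    + intros x Hx. simpl in Hx. replace x with 0 by lra.
      rewrite Hw0, w_tilde_0. rewrite Rminus_0_r, Rabs_R0. lra.
  - exfalso. destruct L; simpl in Hx0; auto.
Qed.

Theorem corollary4p2 (A A0 : R) (a : R -> Rbar) (w dw ddw : R -> R -> R) :
  0 < A -> 0 < A0 ->
  (forall eps, 0 < eps < 1 ->
     is_shooting_solution A A0 eps (a eps) (w eps) (dw eps) (ddw eps)) ->
  (A < 1 -> cloc_conv (Finite (- ln ((1 + A) / (1 - A)))) a w (w_tilde A)) /\
  (1 < A -> cloc_conv m_infty a w (w_tilde A)).
Proof.
  intros HA HA0 Hsol. split.
  - intros HA1. apply (conv_gen A A0 _ a w dw ddw HA HA0 Hsol).
    intros x0 Hx0 _. simpl in Hx0.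
    assert (Hq : 0 < (1 + A) / (1 - A)) by (apply Rdiv_lt_0_compat; lra).
    assert (H1 : exp (- ln ((1 + A) / (1 - A))) < exp x0) by (apply exp_increasing; auto).
    rewrite exp_Ropp, exp_ln in H1 by auto.
    assert (E : / ((1 + A) / (1 - A)) = (1 - A) / (1 + A)) by (field; lra).
    rewrite E in H1.
    assert ((1 - A) / (1 + A) * (1 + A) = 1 - A) by (field; lra).
    assert ((1 - A) / (1 + A) * (1 + A) < exp x0 * (1 + A)) by (apply Rmult_lt_compat_r; lra).
    lra.
  - intros HA1. apply (conv_gen A A0 _ a w dw ddw HA HA0 Hsol).
    intros x0 _ _. assert (0 < exp x0) by apply exp_pos. nra.
Qed.
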